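(* Let $d\in\mathbb{N}_{+}$, $\omega\in\mathbb{R}^d$, $\rho>0$, $m>d+5$, $\beta>0$ with $1/\sqrt\beta\notin\mathbb{Z}$, and $f\in\mathcal{H}^{\rho,m}(\mathbb{T}^{d+1})$. Let $\Omega=\Omega(\sigma,\mu)$ with $\mu$ sufficiently large and $\sigma$ sufficiently small. For $\varepsilon\in\Omega$ let $\mathcal{N}_\varepsilon=\varepsilon(\omega\cdot\partial_\theta)^2+(\omega\cdot\partial_\theta)-\varepsilon\beta\partial_x^4-\varepsilon\partial_x^2$ and $\mathcal{T}_\varepsilon(U)=\varepsilon\mathcal{N}_\varepsilon^{-1}[(U^2)_{xx}+f]$. Then $\mathcal{T}$, defined by $\mathcal{T}(U)_\varepsilon=\mathcal{T}_\varepsilon(U_\varepsilon)$, maps $\mathcal{H}^{\rho,m,\Omega}$ into itself. Precisely, if $\varepsilon\mapsto U_\varepsilon$, $\Omega\to\mathcal{H}^{\rho,m}$, is complex differentiable, then $\varepsilon\mapsto\mathcal{T}_\varepsilon(U_\varepsilon)$, $\Omega\to\mathcal{H}^{\rho,m}$, is also complex differentiable.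
   Context: $\Omega(\sigma,\mu)=\{\varepsilon\in\mathbb{C}:\ \mathrm{Re}\,\varepsilon\ge\mu|\mathrm{Im}\,\varepsilon|,\ \sigma\le|\varepsilon|\le2\sigma\}$. $\mathcal{H}^{\rho,m}$ is the space of analytic $U(\theta,x)=\sum_{k\in\mathbb{Z}^d,j\in\mathbb{Z}}\widehat U_{k,j}e^{\mathrm{i}(k\cdot\theta+jx)}$ on the complex strip of width $\rho$ around $\mathbb{T}^{d+1}$, with $\int_0^{2\pi}U\,dx=0$ (so $\widehat U_{k,0}=0$) and $\|U\|_{\rho,m}^2=\sum|\widehat U_{k,j}|^2e^{2\rho(|k|+|j|)}(|k|^2+|j|^2+1)^m<\infty$. $\mathcal{N}_\varepsilon$ is the Fourier multiplier with symbol $-\varepsilon(k\cdot\omega)^2+\mathrm{i}(k\cdot\omega)-\varepsilon(\beta j^4-j^2)$. $\mathcal{H}^{\rho,m,\Omega}$ is the Banach space of bounded analytic maps $\Omega\to\mathcal{H}^{\rho,m}$ with the supremum norm. *)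

(* Defs.v *)
From Stdlib Require Import Reals Lra ZArith List ClassicalEpsilon.
From Coquelicot Require Import Coquelicot.
Open Scope R_scope.

(** Fourier indices (k, j) in Z^d x Z.  k is represented by a list of
    integers; only lists of length d are genuine indices. A function
    U : list Z -> Z -> C is the family of Fourier coefficients
    U k j = \hat U_{k,j} of U(theta,x) = sum U_{k,j} e^{i(k.theta + j x)}. *)
Definition Coef := list Z -> Z -> C.

Definition valid_idx (d : nat) (kj : list Z * Z) : Prop := length (fst kj) = d.

Definition fin_idx (d : nat) (F : list (list Z * Z)) : Prop :=
  NoDup F /\ List.Forall (valid_idx d) F.

Definition sumR (F : list (list Z * Z)) (g : list Z * Z -> R) : R :=
  fold_right Rplus 0 (map g F).
Definition sumC (F : list (list Z * Z)) (g : list Z * Z -> C) : C :=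
  fold_right Cplus (RtoC 0) (map g F).

Definition has_sumC (d : nat) (g : list Z * Z -> C) (S : C) : Prop :=
  forall eps, 0 < eps -> exists F0, fin_idx d F0 /\
    forall F, fin_idx d F -> incl F0 F -> Cmod (Cminus (sumC F g) S) < eps.

(** The sum of a family (defined when it is summable, arbitrary otherwise). *)
Definition csum (d : nat) (g : list Z * Z -> C) : C :=
  epsilon (inhabits (RtoC 0)) (fun S => has_sumC d g S).

Definition absk (k : list Z) : R := fold_right Rplus 0 (map (fun z => Rabs (IZR z)) k).

Definition weight (rho m : R) (k : list Z) (j : Z) : R :=
  exp (2 * rho * (absk k + Rabs (IZR j)))
  * Rpower (absk k ^ 2 + IZR j ^ 2 + 1) m.

Definition sqnorm (d : nat) (rho m : R) (U : Coef) : Rbar :=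
  Lub_Rbar (fun s => exists F, fin_idx d F /\
     s = sumR F (fun kj => (Cmod (U (fst kj) (snd kj)))^2 * weight rho m (fst kj) (snd kj))).

(** Membership in H^{rho,m}: zero x-average and finite norm. *)
Definition in_H (d : nat) (rho m : R) (U : Coef) : Prop :=
  (forall k, length k = d -> U k 0%Z = RtoC 0) /\ is_finite (sqnorm d rho m U).

Definition Hnorm (d : nat) (rho m : R) (U : Coef) : R := sqrt (real (sqnorm d rho m U)).

Definition Omega (sigma mu : R) (e : C) : Prop :=
  mu * Rabs (Im e) <= Re e /\ sigma <= Cmod e <= 2 * sigma.

Definition cdiff_within (d : nat) (rho m : R) (D : C -> Prop)
    (U : C -> Coef) (e0 : C) : Prop :=
  exists V : Coef, in_H d rho m V /\
    forall eta, 0 < eta -> exists delta, 0 < delta /\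
      forall e, D e -> 0 < Cmod (Cminus e e0) < delta ->
        Hnorm d rho m (fun k j =>
           Cminus (Cdiv (Cminus (U e k j) (U e0 k j)) (Cminus e e0)) (V k j)) < eta.

Definition analytic_on (d : nat) (rho m : R) (D : C -> Prop) (U : C -> Coef) : Prop :=
  (forall e, D e -> in_H d rho m (U e)) /\
  (forall e, D e -> cdiff_within d rho m D U e).

Definition in_H_Omega (d : nat) (rho m : R) (D : C -> Prop) (U : C -> Coef) : Prop :=
  analytic_on d rho m D U /\
  exists M, forall e, D e -> Hnorm d rho m (U e) <= M.

Fixpoint dotZR (k : list Z) (w : list R) : R :=
  match k, w with
  | a :: k', b :: w' => IZR a * b + dotZR k' w'
  | _, _ => 0
  end.

Definition subZ (k1 k2 : list Z) : list Z := map (fun p => (fst p - snd p)%Z) (combine k1 k2).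

Definition sqU (d : nat) (U : Coef) : Coef := fun k j =>
  csum d (fun kj1 => Cmult (U (fst kj1) (snd kj1)) (U (subZ k (fst kj1)) (j - snd kj1)%Z)).

Definition Nsym (w : list R) (beta : R) (e : C) (k : list Z) (j : Z) : C :=
  let kw := dotZR k w in
  Cminus (Cplus (Cmult (Copp e) (RtoC (kw ^ 2))) (Cmult Ci (RtoC kw)))
         (Cmult e (RtoC (beta * IZR j ^ 4 - IZR j ^ 2))).

(** T_eps(U) = eps N_eps^{-1} [ (U^2)_xx + f ]   (on zero-mean functions;
    the j = 0 coefficient is 0). *)
Definition T_op (d : nat) (w : list R) (beta : R) (f : Coef) (e : C) (U : Coef) : Coef :=
  fun k j =>
    if Z.eqb j 0 then RtoC 0
    else Cmult e (Cdiv (Cplus (Cmult (RtoC (- IZR j ^ 2)) (sqU d U k j)) (f k j))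
                       (Nsym w beta e k j)).

(* Main.v *)
Require Import Defs.
From Stdlib Require Import Reals Lra Lia ZArith List Permutation ClassicalEpsilon.
From Coquelicot Require Import Coquelicot.
Open Scope R_scope.

Definition I := (list Z * Z)%type.
Definition I_dec : forall x y : I, {x = y} + {x <> y}.
Proof. decide equality; [apply Z.eq_dec | apply (list_eq_dec Z.eq_dec)]. Defined.

Lemma sumR_nil g : sumR nil g = 0. Proof. reflexivity. Qed.
Lemma sumR_cons x F g : sumR (x :: F) g = g x + sumR F g. Proof. reflexivity. Qed.
Lemma sumR_app F G g : sumR (F ++ G) g = sumR F g + sumR G g.
Proof. induction F; unfold sumR in *; simpl; [ring|]. rewrite IHF; ring. Qed.
Lemma sumR_perm F G g : Permutation F G -> sumR F g = sumR G g.
Proof. induction 1; unfold sumR in *; simpl; try lra. Qed.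
Lemma sumR_plus F f g : sumR F (fun x => f x + g x) = sumR F f + sumR F g.
Proof. induction F; unfold sumR in *; simpl; [ring|]. rewrite IHF; ring. Qed.
Lemma sumR_scal F c f : sumR F (fun x => c * f x) = c * sumR F f.
Proof. induction F; unfold sumR in *; simpl; [ring|]. rewrite IHF; ring. Qed.
Lemma sumR_ext F f g : (forall x, In x F -> f x = g x) -> sumR F f = sumR F g.
Proof. induction F; intros H; unfold sumR in *; simpl; auto. rewrite H by (left; auto).
  rewrite IHF; auto. intros; apply H; right; auto. Qed.
Lemma sumR_le F f g : (forall x, In x F -> f x <= g x) -> sumR F f <= sumR F g.
Proof. induction F; intros H; unfold sumR in *; simpl; [lra|].
  assert (f a <= g a) by (apply H; left; auto).
  assert (fold_right Rplus 0 (map f F) <= fold_right Rplus 0 (map g F)) by (apply IHF; intros; apply H; right; auto).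
  lra. Qed.
Lemma sumR_nonneg F f : (forall x, In x F -> 0 <= f x) -> 0 <= sumR F f.
Proof. intros H. replace 0 with (sumR F (fun _ => 0)). apply sumR_le; auto.
  induction F; unfold sumR in *; simpl; auto. rewrite IHF; [ring|]. intros; apply H; right; auto. Qed.
Lemma sumR_map (h : I -> I) F g : sumR (map h F) g = sumR F (fun x => g (h x)).
Proof. unfold sumR; rewrite map_map; reflexivity. Qed.
Lemma sumR_swap (F : list I) (G : list I) (h : I -> I -> R) :
  sumR F (fun x => sumR G (fun y => h x y)) = sumR G (fun y => sumR F (fun x => h x y)).
Proof. induction F; simpl. { unfold sumR at 1; simpl. symmetry.
  replace 0 with (sumR G (fun _ => 0)). apply sumR_ext; auto.
  clear; induction G; unfold sumR in *; simpl; auto. rewrite IHG; ring. }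
  unfold sumR at 1; simpl. fold (sumR F (fun x => sumR G (fun y => h x y))). rewrite IHF.
  rewrite <- sumR_plus. apply sumR_ext. intros. reflexivity. Qed.

Lemma sumR_incl (l2 l1 : list I) g :
  NoDup l1 -> incl l1 l2 -> (forall x, In x l2 -> 0 <= g x) -> sumR l1 g <= sumR l2 g.
Proof.
  revert l1; induction l2 as [|x l2 IH]; intros l1 Hnd Hinc Hpos.
  - destruct l1 as [|y l1]; [simpl; lra|]. exfalso; apply (Hinc y); left; auto.
  - rewrite sumR_cons. destruct (in_dec I_dec x l1) as [Hin|Hnin].
    + destruct (in_split _ _ Hin) as [a [b Hab]]. subst l1.
      rewrite (sumR_perm _ (x :: a ++ b)) by (symmetry; apply Permutation_middle).
      rewrite sumR_cons. apply Rplus_le_compat_l. apply IH.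
      * eapply NoDup_remove_1; eauto.
      * intros y Hy. assert (Hy' : In y (a ++ x :: b)).
        { apply in_app_or in Hy; apply in_or_app; destruct Hy; [left|right;right]; auto. }
        destruct (Hinc y Hy') as [<-|]; auto. exfalso; eapply NoDup_remove_2; eauto.
      * intros; apply Hpos; right; auto.
    + assert (0 <= g x) by (apply Hpos; left; auto).
      assert (sumR l1 g <= sumR l2 g).
      { apply IH; auto. intros y Hy. destruct (Hinc y Hy) as [<-|]; auto. contradiction.
        intros; apply Hpos; right; auto. }
      lra.
Qed.

Lemma sumC_cons x F g : sumC (x :: F) g = Cplus (g x) (sumC F g). Proof. reflexivity. Qed.
Lemma sumC_split F g : sumC F g = (sumR F (fun x => fst (g x)), sumR F (fun x => snd (g x))).
Proof. induction F; [reflexivity|]. rewrite sumC_cons, IHF. reflexivity. Qed.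
Lemma sumC_plus F f g : sumC F (fun x => Cplus (f x) (g x)) = Cplus (sumC F f) (sumC F g).
Proof. induction F; simpl. { apply injective_projections; simpl; ring. }
  rewrite !sumC_cons, IHF. apply injective_projections; simpl; ring. Qed.
Lemma sumC_scal F c f : sumC F (fun x => Cmult c (f x)) = Cmult c (sumC F f).
Proof. induction F. { apply injective_projections; simpl; ring. }
  rewrite !sumC_cons, IHF. apply injective_projections; simpl; ring. Qed.
Lemma sumC_ext F f g : (forall x, In x F -> f x = g x) -> sumC F f = sumC F g.
Proof. induction F; intros H; auto. rewrite !sumC_cons, H, IHF; auto. intros; apply H; right; auto. left; auto. Qed.
Lemma sumC_mod F g : Cmod (sumC F g) <= sumR F (fun x => Cmod (g x)).
Proof. induction F. { unfold sumC, sumR; simpl. rewrite Cmod_0. lra. }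
  rewrite sumC_cons, sumR_cons. eapply Rle_trans; [apply Cmod_triangle|]. lra. Qed.

Definition funion (F1 F2 : list I) : list I := nodup I_dec (F1 ++ F2).
Lemma funion_fin d F1 F2 : fin_idx d F1 -> fin_idx d F2 -> fin_idx d (funion F1 F2).
Proof. intros [_ H1] [_ H2]. split. apply NoDup_nodup. apply Forall_forall. intros x Hx.
  apply nodup_In in Hx. apply in_app_or in Hx. rewrite Forall_forall in H1, H2. destruct Hx; auto. Qed.
Lemma funion_l F1 F2 : incl F1 (funion F1 F2).
Proof. intros x Hx; apply nodup_In; apply in_or_app; auto. Qed.
Lemma funion_r F1 F2 : incl F2 (funion F1 F2).
Proof. intros x Hx; apply nodup_In; apply in_or_app; auto. Qed.
Lemma fin_nil d : fin_idx d nil. Proof. split; constructor. Qed.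

Lemma Cmod_le_abs (z : C) : Cmod z <= Rabs (fst z) + Rabs (snd z).
Proof. unfold Cmod. rewrite <- (sqrt_pow2 (Rabs (fst z) + Rabs (snd z))) by (pose proof (Rabs_pos (fst z)); pose proof (Rabs_pos (snd z)); lra).
  apply sqrt_le_1_alt. rewrite <- (pow2_abs (fst z)), <- (pow2_abs (snd z)).
  pose proof (Rabs_pos (fst z)); pose proof (Rabs_pos (snd z)). nra. Qed.
Lemma abs_fst_le (z : C) : Rabs (fst z) <= Cmod z.
Proof. unfold Cmod. rewrite <- (sqrt_pow2 (Rabs (fst z))) by apply Rabs_pos.
  apply sqrt_le_1_alt. rewrite pow2_abs. pose proof (pow2_ge_0 (snd z)); lra. Qed.
Lemma abs_snd_le (z : C) : Rabs (snd z) <= Cmod z.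
Proof. unfold Cmod. rewrite <- (sqrt_pow2 (Rabs (snd z))) by apply Rabs_pos.
  apply sqrt_le_1_alt. rewrite pow2_abs. pose proof (pow2_ge_0 (fst z)); lra. Qed.


Lemma Cmod_tri3 (a b c : C) : Cmod (Cminus a c) <= Cmod (Cminus a b) + Cmod (Cminus b c).
Proof. replace (Cminus a c) with (Cplus (Cminus a b) (Cminus b c)) by ring. apply Cmod_triangle. Qed.
Lemma Cmod_sym (a b : C) : Cmod (Cminus a b) = Cmod (Cminus b a).
Proof. replace (Cminus a b) with (Copp (Cminus b a)) by ring. apply Cmod_opp. Qed.

Lemma has_sumC_unique d g S1 S2 : has_sumC d g S1 -> has_sumC d g S2 -> S1 = S2.
Proof. intros H1 H2. apply Ceq_minus.
  destruct (Req_dec (Cmod (Cminus S1 S2)) 0) as [E|E]. apply Cmod_eq_0; auto.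
  exfalso. pose proof (Cmod_ge_0 (Cminus S1 S2)) as Hp.
  set (eps := Cmod (Cminus S1 S2) / 2).
  destruct (H1 eps) as [F1 [Hf1 P1]]. unfold eps; lra.
  destruct (H2 eps) as [F2 [Hf2 P2]]. unfold eps; lra.
  pose proof (P1 _ (funion_fin _ _ _ Hf1 Hf2) (funion_l _ _)) as Q1.
  pose proof (P2 _ (funion_fin _ _ _ Hf1 Hf2) (funion_r _ _)) as Q2.
  pose proof (Cmod_tri3 S1 (sumC (funion F1 F2) g) S2) as Q3.
  rewrite Cmod_sym in Q1. unfold eps in *; lra. Qed.

Lemma csum_eq d g S : has_sumC d g S -> csum d g = S.
Proof. intros H. unfold csum. eapply has_sumC_unique; [|apply H].
  apply (epsilon_spec (inhabits (RtoC 0)) (fun S => has_sumC d g S)). exists S; auto. Qed.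

Lemma has_sumC_plus d f g S1 S2 : has_sumC d f S1 -> has_sumC d g S2 ->
  has_sumC d (fun x => Cplus (f x) (g x)) (Cplus S1 S2).
Proof. intros H1 H2 eps Heps.
  destruct (H1 (eps/2)) as [F1 [Hf1 P1]]; [lra|]. destruct (H2 (eps/2)) as [F2 [Hf2 P2]]; [lra|].
  exists (funion F1 F2); split; [apply funion_fin; auto|]. intros F HF Hinc.
  rewrite sumC_plus. replace (Cminus (Cplus (sumC F f) (sumC F g)) (Cplus S1 S2)) with
    (Cplus (Cminus (sumC F f) S1) (Cminus (sumC F g) S2)) by ring.
  eapply Rle_lt_trans; [apply Cmod_triangle|].
  assert (Cmod (Cminus (sumC F f) S1) < eps/2) by (apply P1; auto; intros y Hy; apply Hinc, funion_l; auto).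
  assert (Cmod (Cminus (sumC F g) S2) < eps/2) by (apply P2; auto; intros y Hy; apply Hinc, funion_r; auto).
  lra. Qed.

Lemma has_sumC_scal d f S c : has_sumC d f S -> has_sumC d (fun x => Cmult c (f x)) (Cmult c S).
Proof. intros H eps Heps. pose proof (Cmod_ge_0 c).
  destruct (H (eps / (Cmod c + 1))) as [F0 [Hf P]]. apply Rdiv_lt_0_compat; lra.
  exists F0; split; auto. intros F HF Hinc. rewrite sumC_scal.
  replace (Cminus (Cmult c (sumC F f)) (Cmult c S)) with (Cmult c (Cminus (sumC F f) S)) by ring.
  rewrite Cmod_mult. specialize (P F HF Hinc). pose proof (Cmod_ge_0 (Cminus (sumC F f) S)).
  apply Rle_lt_trans with ((Cmod c + 1) * Cmod (Cminus (sumC F f) S)). nra.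
  assert (Q := Rmult_lt_compat_l (Cmod c + 1) _ _ ltac:(lra) P). clear P. rename Q into P. replace ((Cmod c + 1) * (eps / (Cmod c + 1))) with eps in P by (field; lra). lra. Qed.

Lemma has_sumC_ext d f g S : (forall x, f x = g x) -> has_sumC d f S -> has_sumC d g S.
Proof. intros E H eps Heps. destruct (H eps Heps) as [F0 [Hf P]]. exists F0; split; auto.
  intros F HF Hinc. rewrite <- (sumC_ext F f g) by auto. auto. Qed.

Lemma nn_sum d h L : (forall x, 0 <= h x) -> (forall F, fin_idx d F -> sumR F h <= L) ->
  exists s, forall eps, 0 < eps -> exists F0, fin_idx d F0 /\
    forall F, fin_idx d F -> incl F0 F -> Rabs (sumR F h - s) < eps.
Proof. intros Hpos HL.
  set (E := fun s => exists F, fin_idx d F /\ s = sumR F h).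
  assert (Hb : bound E). { exists L. intros x [F [HF ->]]. auto. }
  assert (Hne : exists x, E x). { exists 0. exists nil. split; [apply fin_nil|reflexivity]. }
  destruct (completeness E Hb Hne) as [s [Hub Hlub]].
  exists s. intros eps Heps.
  destruct (Classical_Prop.classic (exists F0, fin_idx d F0 /\ s - eps < sumR F0 h)) as [[F0 [HF0 Hs]]|Hn].
  - exists F0; split; auto. intros F HF Hinc.
    assert (sumR F0 h <= sumR F h) by (apply sumR_incl; auto; apply HF0).
    assert (sumR F h <= s) by (apply Hub; exists F; auto).
    apply Rabs_def1; lra.
  - exfalso. assert (s <= s - eps); [|lra]. apply Hlub. intros x [F [HF ->]].
    apply Rnot_lt_le. intros Hc. apply Hn. exists F; auto. Qed.

Lemma real_sum d x L : (forall F, fin_idx d F -> sumR F (fun y => Rabs (x y)) <= L) ->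
  exists s, forall eps, 0 < eps -> exists F0, fin_idx d F0 /\
    forall F, fin_idx d F -> incl F0 F -> Rabs (sumR F x - s) < eps.
Proof. intros HL.
  destruct (nn_sum d (fun y => Rabs (x y) + x y) (2 * L)) as [s1 H1].
  { intros y. pose proof (Rle_abs (- x y)). rewrite Rabs_Ropp in H. lra. }
  { intros F HF. rewrite sumR_plus. specialize (HL F HF).
    assert (sumR F x <= sumR F (fun y => Rabs (x y))) by (apply sumR_le; intros; apply Rle_abs). lra. }
  destruct (nn_sum d (fun y => Rabs (x y)) L) as [s2 H2]; auto. intros; apply Rabs_pos.
  exists (s1 - s2). intros eps Heps.
  destruct (H1 (eps/2)) as [F1 [Hf1 P1]]; [lra|]. destruct (H2 (eps/2)) as [F2 [Hf2 P2]]; [lra|].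
  exists (funion F1 F2); split; [apply funion_fin; auto|]. intros F HF Hinc.
  assert (A1 := P1 F HF (fun y Hy => Hinc y (funion_l _ _ y Hy))).
  assert (A2 := P2 F HF (fun y Hy => Hinc y (funion_r _ _ y Hy))).
  rewrite sumR_plus in A1.
  apply Rabs_def2 in A1; apply Rabs_def2 in A2. apply Rabs_def1; lra. Qed.

Lemma abs_summable d g L : (forall F, fin_idx d F -> sumR F (fun y => Cmod (g y)) <= L) ->
  exists S, has_sumC d g S.
Proof. intros HL.
  destruct (real_sum d (fun y => fst (g y)) L) as [s1 H1].
  { intros F HF. eapply Rle_trans; [|apply (HL F HF)]. apply sumR_le; intros; apply abs_fst_le. }
  destruct (real_sum d (fun y => snd (g y)) L) as [s2 H2].
  { intros F HF. eapply Rle_trans; [|apply (HL F HF)]. apply sumR_le; intros; apply abs_snd_le. }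
  exists (s1, s2). intros eps Heps.
  destruct (H1 (eps/2)) as [F1 [Hf1 P1]]; [lra|]. destruct (H2 (eps/2)) as [F2 [Hf2 P2]]; [lra|].
  exists (funion F1 F2); split; [apply funion_fin; auto|]. intros F HF Hinc.
  assert (A1 := P1 F HF (fun y Hy => Hinc y (funion_l _ _ y Hy))).
  assert (A2 := P2 F HF (fun y Hy => Hinc y (funion_r _ _ y Hy))).
  eapply Rle_lt_trans; [apply Cmod_le_abs|]. rewrite sumC_split.
  change (fst (Cminus (sumR F (fun x => fst (g x)), sumR F (fun x => snd (g x))) (s1, s2))) with (sumR F (fun x => fst (g x)) - s1).
  change (snd (Cminus (sumR F (fun x => fst (g x)), sumR F (fun x => snd (g x))) (s1, s2))) with (sumR F (fun x => snd (g x)) - s2).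
  lra. Qed.

Lemma has_sumC_bound d g S L : has_sumC d g S ->
  (forall F, fin_idx d F -> sumR F (fun y => Cmod (g y)) <= L) -> Cmod S <= L.
Proof. intros H HL. apply Rnot_lt_le. intros Hc.
  destruct (H (Cmod S - L)) as [F0 [Hf P]]; [lra|].
  specialize (P F0 Hf (incl_refl _)). pose proof (sumC_mod F0 g). specialize (HL F0 Hf).
  pose proof (Cmod_tri3 S (sumC F0 g) 0). rewrite Cmod_sym in P.
  replace (Cminus S 0) with S in H1 by ring. replace (Cminus (sumC F0 g) 0) with (sumC F0 g) in H1 by ring.
  lra. Qed.

Definition wt (rho m : R) (n : I) : R := weight rho m (fst n) (snd n).
Definition cm (U : Coef) (n : I) : R := Cmod (U (fst n) (snd n)).
Definition bnd (d : nat) (rho m : R) (a : I -> R) (B : R) : Prop :=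
  forall F, fin_idx d F -> sumR F (fun n => a n ^ 2 * wt rho m n) <= B.

Lemma absk_ge0 k : 0 <= absk k.
Proof. induction k; unfold absk in *; simpl; [lra|]. pose proof (Rabs_pos (IZR a)); lra. Qed.

Lemma wt_ge1 rho m n : 0 <= rho -> 0 <= m -> 1 <= wt rho m n.
Proof. intros Hr Hm. unfold wt, weight. destruct n as [k j]; cbn [fst snd].
  pose proof (absk_ge0 k). pose proof (Rabs_pos (IZR j)).
  assert (1 <= exp (2 * rho * (absk k + Rabs (IZR j)))).
  { rewrite <- exp_0. destruct (Req_dec (2 * rho * (absk k + Rabs (IZR j))) 0) as [E|E]. rewrite E; lra.
    left; apply exp_increasing. assert (0 <= 2 * rho * (absk k + Rabs (IZR j))) by (apply Rmult_le_pos; lra). lra. }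
  assert (1 <= Rpower (absk k ^ 2 + IZR j ^ 2 + 1) m).
  { rewrite <- (Rpower_O (absk k ^ 2 + IZR j ^ 2 + 1)) at 1 by nra. apply Rle_Rpower; nra. }
  nra. Qed.

Lemma bnd_sqnorm d rho m U B : bnd d rho m (cm U) B ->
  is_finite (sqnorm d rho m U) /\ real (sqnorm d rho m U) <= B /\ 0 <= real (sqnorm d rho m U).
Proof. intros H. unfold sqnorm.
  destruct (Lub_Rbar_correct (fun s => exists F, fin_idx d F /\
     s = sumR F (fun kj => (Cmod (U (fst kj) (snd kj)))^2 * weight rho m (fst kj) (snd kj)))) as [Hub Hlub].
  assert (H0 : Rbar_le 0 (Lub_Rbar (fun s => exists F, fin_idx d F /\
     s = sumR F (fun kj => (Cmod (U (fst kj) (snd kj)))^2 * weight rho m (fst kj) (snd kj))))).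
  { apply Hub. exists nil; split; [apply fin_nil|reflexivity]. }
  assert (HB : Rbar_le (Lub_Rbar (fun s => exists F, fin_idx d F /\
     s = sumR F (fun kj => (Cmod (U (fst kj) (snd kj)))^2 * weight rho m (fst kj) (snd kj)))) B).
  { apply Hlub. intros x [F [HF ->]]. apply (H F HF). }
  destruct (Lub_Rbar _); simpl in *; try contradiction. repeat split; auto. Qed.

Lemma in_H_bnd d rho m U : in_H d rho m U -> bnd d rho m (cm U) (real (sqnorm d rho m U)) /\ 0 <= real (sqnorm d rho m U).
Proof. intros [_ Hf]. unfold sqnorm in *.
  destruct (Lub_Rbar_correct (fun s => exists F, fin_idx d F /\
     s = sumR F (fun kj => (Cmod (U (fst kj) (snd kj)))^2 * weight rho m (fst kj) (snd kj)))) as [Hub Hlub].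
  assert (H0 : Rbar_le 0 (Lub_Rbar (fun s => exists F, fin_idx d F /\
     s = sumR F (fun kj => (Cmod (U (fst kj) (snd kj)))^2 * weight rho m (fst kj) (snd kj))))).
  { apply Hub. exists nil; split; [apply fin_nil|reflexivity]. }
  split.
  - intros F HF. assert (Hx := Hub _ (ex_intro _ F (conj HF eq_refl))).
    destruct (Lub_Rbar _); unfold is_finite in Hf; simpl in *; auto; discriminate.
  - destruct (Lub_Rbar _); simpl in *; auto; lra. Qed.

Lemma in_H_of d rho m U B : (forall k, length k = d -> U k 0%Z = RtoC 0) -> bnd d rho m (cm U) B -> in_H d rho m U.
Proof. intros H0 Hb. split; auto. apply (bnd_sqnorm _ _ _ _ _ Hb). Qed.

Lemma Hnorm_bnd d rho m U B : bnd d rho m (cm U) B -> Hnorm d rho m U <= sqrt B.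
Proof. intros Hb. destruct (bnd_sqnorm _ _ _ _ _ Hb) as [_ [H1 H2]]. unfold Hnorm. apply sqrt_le_1_alt; auto. Qed.

Lemma Hnorm_sq d rho m U : in_H d rho m U -> Hnorm d rho m U ^ 2 = real (sqnorm d rho m U).
Proof. intros H. destruct (in_H_bnd _ _ _ _ H) as [_ H2]. unfold Hnorm. rewrite pow2_sqrt; auto. Qed.

Lemma Hnorm_lt d rho m U eta : in_H d rho m U -> 0 < eta -> Hnorm d rho m U < eta -> real (sqnorm d rho m U) < eta ^ 2.
Proof. intros H He Hl. rewrite <- Hnorm_sq by auto. assert (0 <= Hnorm d rho m U) by apply sqrt_pos. nra. Qed.
Lemma Hnorm_le d rho m U M : in_H d rho m U -> Hnorm d rho m U <= M -> real (sqnorm d rho m U) <= M ^ 2.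
Proof. intros H Hl. rewrite <- Hnorm_sq by auto. assert (0 <= Hnorm d rho m U) by apply sqrt_pos. nra. Qed.

Lemma fin_valid d F n : fin_idx d F -> In n F -> length (fst n) = d.
Proof. intros [_ H] Hn. rewrite Forall_forall in H. apply (H n Hn). Qed.

Lemma bnd_dom d rho m a b B : 0 <= rho -> 0 <= m -> (forall n, length (fst n) = d -> 0 <= a n <= b n) ->
  bnd d rho m b B -> bnd d rho m a B.
Proof. intros Hr Hm H Hb F HF. eapply Rle_trans; [|apply (Hb F HF)]. apply sumR_le. intros n Hn.
  specialize (H n (fin_valid _ _ _ HF Hn)). pose proof (wt_ge1 rho m n Hr Hm).
  apply Rmult_le_compat_r; [lra|]. apply pow_incr; lra. Qed.

Lemma bnd_plus d rho m a b A B : 0 <= rho -> 0 <= m -> bnd d rho m a A -> bnd d rho m b B ->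
  bnd d rho m (fun n => a n + b n) (2 * A + 2 * B).
Proof. intros Hr Hm Ha Hb F HF. specialize (Ha F HF); specialize (Hb F HF).
  apply Rle_trans with (sumR F (fun n => 2 * (a n ^ 2 * wt rho m n) + 2 * (b n ^ 2 * wt rho m n))).
  - apply sumR_le. intros n _. pose proof (wt_ge1 rho m n Hr Hm).
    assert ((a n + b n) ^ 2 <= 2 * a n ^ 2 + 2 * b n ^ 2) by (pose proof (pow2_ge_0 (a n - b n)); nra).
    replace (2 * (a n ^ 2 * wt rho m n) + 2 * (b n ^ 2 * wt rho m n)) with ((2 * a n ^ 2 + 2 * b n ^ 2) * wt rho m n) by ring.
    apply Rmult_le_compat_r; lra.
  - rewrite sumR_plus, !sumR_scal. lra. Qed.

Lemma bnd_scal d rho m a A c : bnd d rho m a A -> bnd d rho m (fun n => c * a n) (c ^ 2 * A).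
Proof. intros Ha F HF. specialize (Ha F HF).
  replace (sumR F (fun n => (c * a n) ^ 2 * wt rho m n)) with (c ^ 2 * sumR F (fun n => a n ^ 2 * wt rho m n)).
  pose proof (pow2_ge_0 c). nra. rewrite <- sumR_scal. apply sumR_ext; intros; ring. Qed.

Lemma bnd_weaken d rho m a A B : bnd d rho m a A -> A <= B -> bnd d rho m a B.
Proof. intros H HAB F HF. specialize (H F HF). lra. Qed.

Definition gsum {A} (l : list A) (g : A -> R) : R := fold_right Rplus 0 (map g l).
Lemma gsum_app {A} (l1 l2 : list A) g : gsum (l1 ++ l2) g = gsum l1 g + gsum l2 g.
Proof. induction l1; unfold gsum in *; simpl; [ring|]. rewrite IHl1; ring. Qed.
Lemma gsum_scal {A} (l : list A) c g : gsum l (fun x => c * g x) = c * gsum l g.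
Proof. induction l; unfold gsum in *; simpl; [ring|]. rewrite IHl; ring. Qed.

Definition h0 (z : Z) : R := / (1 + IZR z ^ 2).
Lemma h0_pos z : 0 < h0 z. Proof. unfold h0. apply Rinv_0_lt_compat. pose proof (pow2_ge_0 (IZR z)); lra. Qed.

Fixpoint zr (N : nat) : list Z :=
  match N with O => 0%Z :: nil | S n => Z.of_nat (S n) :: Z.opp (Z.of_nat (S n)) :: zr n end.
Lemma zr_in N z : (Z.abs_nat z <= N)%nat -> In z (zr N).
Proof. induction N; intros H; simpl. left; lia.
  destruct (Nat.eq_dec (Z.abs_nat z) (S N)). destruct (Z.abs_spec z) as [[? ?]|[? ?]]; [left|right;left]; lia.
  right; right; apply IHN; lia. Qed.
Lemma zr_sum N : gsum (zr N) h0 <= 5 - 4 / (INR N + 1).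
Proof. induction N. unfold gsum, h0; simpl. replace (1 + 0 * (0 * 1)) with 1 by ring. replace (0+1) with 1 by ring. lra.
  unfold gsum in *; cbn [zr map fold_right]. fold (gsum (zr N) h0) in *. unfold h0 at 1 2.
  rewrite opp_IZR. rewrite <- INR_IZR_INZ. rewrite S_INR.
  set (x := INR N + 1). assert (1 <= x) by (unfold x; pose proof (pos_INR N); lra).
  replace ((- x) ^ 2) with (x ^ 2) by ring.
  assert (/ (1 + x^2) <= 2 / x - 2 / (x + 1)).
  { replace (2 / x - 2 / (x + 1)) with (2 / (x * (x + 1))) by (field; lra).
    apply Rmult_le_reg_l with ((1 + x^2) * (x * (x+1))). nra.
    replace ((1 + x ^ 2) * (x * (x + 1)) * / (1 + x ^ 2)) with (x * (x+1)) by (field; nra).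
    replace ((1 + x ^ 2) * (x * (x + 1)) * (2 / (x * (x + 1)))) with (2 * (1 + x^2)) by (field; nra). nra. }
  change (INR N + 1) with x in IHN. lra. Qed.

Fixpoint boxlist (d N : nat) : list (list Z) :=
  match d with O => nil :: nil | S d' => flat_map (fun z => map (cons z) (boxlist d' N)) (zr N) end.
Definition Pk (k : list Z) : R := fold_right Rmult 1 (map h0 k).

Lemma gsum_flat_cons (Zl : list Z) (B : list (list Z)) :
  gsum (flat_map (fun z => map (cons z) B) Zl) Pk = gsum Zl h0 * gsum B Pk.
Proof. induction Zl; simpl. unfold gsum; simpl; ring.
  rewrite gsum_app, IHZl. unfold gsum at 1 3. simpl. rewrite map_map. unfold Pk at 1. simpl.
  change (fun x : list Z => h0 a * fold_right Rmult 1 (map h0 x)) with (fun x => h0 a * Pk x). fold (gsum B (fun x => h0 a * Pk x)). rewrite gsum_scal. unfold gsum; simpl; ring. Qed.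

Lemma box_sum d N : gsum (boxlist d N) Pk = gsum (zr N) h0 ^ d.
Proof. induction d; simpl. unfold gsum, Pk; simpl; ring. rewrite gsum_flat_cons, IHd. ring. Qed.

Lemma box_in d N k : length k = d -> (forall z, In z k -> (Z.abs_nat z <= N)%nat) -> In k (boxlist d N).
Proof. revert d; induction k; intros d Hl Hz; destruct d; simpl in *; try discriminate; auto.
  apply in_flat_map. exists a. split. apply zr_in, Hz; auto. apply in_map. apply IHk; auto. Qed.

Lemma sumR_prod (B : list (list Z)) (Zl : list Z) :
  sumR (list_prod B Zl) (fun n => Pk (fst n) * h0 (snd n)) = gsum B Pk * gsum Zl h0.
Proof. induction B; simpl. unfold gsum, sumR; simpl; ring. rewrite sumR_app, IHB.
  assert (sumR (map (fun y => (a, y)) Zl) (fun n => Pk (fst n) * h0 (snd n)) = Pk a * gsum Zl h0).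
  { unfold sumR. rewrite map_map. fold (gsum Zl (fun y => Pk (fst (a, y)) * h0 (snd (a, y)))). exact (gsum_scal Zl (Pk a) h0). }
  rewrite H. replace (gsum (a :: B) Pk) with (Pk a + gsum B Pk) by reflexivity. ring. Qed.

Definition nmax (n : I) : nat := Nat.max (Z.abs_nat (snd n)) (fold_right Nat.max 0%nat (map Z.abs_nat (fst n))).
Definition Nmax (G : list I) : nat := fold_right Nat.max 0%nat (map nmax G).
Lemma fold_max_in (l : list nat) x : In x l -> (x <= fold_right Nat.max 0 l)%nat.
Proof. induction l; simpl; intros H; [contradiction|]. destruct H; subst; lia || (specialize (IHl H); lia). Qed.
Lemma Nmax_spec G n : In n G -> (Z.abs_nat (snd n) <= Nmax G)%nat /\ forall z, In z (fst n) -> (Z.abs_nat z <= Nmax G)%nat.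
Proof. intros H. assert (nmax n <= Nmax G)%nat by (apply fold_max_in, in_map; auto).
  unfold nmax in H0. split. lia. intros z Hz. assert (Z.abs_nat z <= fold_right Nat.max 0%nat (map Z.abs_nat (fst n)))%nat.
  apply fold_max_in, in_map; auto. lia. Qed.

Lemma Pk_pos k : 0 < Pk k.
Proof. induction k; unfold Pk in *; simpl; [lra|]. pose proof (h0_pos a); nra. Qed.

Lemma zr_sum_pos N : 0 <= gsum (zr N) h0.
Proof. induction N; unfold gsum in *; simpl; pose proof (h0_pos 0); try lra.
  pose proof (h0_pos (Z.pos (Pos.of_succ_nat N))); pose proof (h0_pos (Z.neg (Pos.of_succ_nat N))). lra. Qed.

Definition baseI (n : I) : R := absk (fst n) ^ 2 + IZR (snd n) ^ 2 + 1.
Lemma baseI_ge1 n : 1 <= baseI n. Proof. unfold baseI. pose proof (pow2_ge_0 (absk (fst n))); pose proof (pow2_ge_0 (IZR (snd n))); lra. Qed.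

Lemma abs_le_absk k z : In z k -> Rabs (IZR z) <= absk k.
Proof. induction k; simpl; intros H; [contradiction|]. unfold absk; simpl. fold (absk k).
  pose proof (absk_ge0 k). pose proof (Rabs_pos (IZR a)). destruct H; subst; [lra|]. specialize (IHk H); lra. Qed.

Lemma Pk_bound k B : 1 <= B -> (forall z, In z k -> 1 + IZR z ^ 2 <= B) -> / B ^ length k <= Pk k.
Proof. induction k; intros HB H; simpl. unfold Pk; simpl; lra.
  unfold Pk; simpl; fold (Pk k). assert (Hk := IHk HB (fun z Hz => H z (or_intror Hz))).
  assert (Ha := H a (or_introl eq_refl)). pose proof (pow2_ge_0 (IZR a)).
  assert (1 <= B ^ length k) by (apply pow_R1_Rle; lra).
  rewrite Rinv_mult. apply Rmult_le_compat. apply Rlt_le, Rinv_0_lt_compat; lra.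
  apply Rlt_le, Rinv_0_lt_compat; lra. unfold h0. apply Rinv_le_contravar; lra. auto. Qed.

Lemma w_inv_bound d m n : INR d + 1 <= m -> length (fst n) = d -> / Rpower (baseI n) m <= Pk (fst n) * h0 (snd n).
Proof. intros Hm Hl. pose proof (baseI_ge1 n).
  assert (A : / baseI n ^ d <= Pk (fst n)).
  { rewrite <- Hl. apply Pk_bound; auto. intros z Hz. unfold baseI. pose proof (abs_le_absk _ _ Hz).
    pose proof (Rabs_pos (IZR z)). rewrite <- (pow2_abs (IZR z)). pose proof (pow2_ge_0 (IZR (snd n))). nra. }
  assert (B : / baseI n <= h0 (snd n)).
  { unfold h0. apply Rinv_le_contravar. pose proof (pow2_ge_0 (IZR (snd n))); lra. unfold baseI. pose proof (pow2_ge_0 (absk (fst n))); lra. }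
  assert (Rpower (baseI n) (INR (S d)) <= Rpower (baseI n) m) by (apply Rle_Rpower; auto; rewrite S_INR; lra).
  rewrite Rpower_pow in H0 by lra. simpl in H0.
  assert (1 <= baseI n ^ d) by (apply pow_R1_Rle; lra).
  apply Rle_trans with (/ (baseI n * baseI n ^ d)).
  apply Rinv_le_contravar; auto. nra. rewrite Rinv_mult.
  rewrite Rmult_comm. apply Rmult_le_compat; auto; apply Rlt_le, Rinv_0_lt_compat; lra. Qed.

Definition Zlat (d : nat) : R := 5 ^ (S d).

Lemma lattice_bound d m G : INR d + 1 <= m -> fin_idx d G ->
  sumR G (fun n => / Rpower (baseI n) m) <= Zlat d.
Proof. intros Hm HG. set (N := Nmax G).
  apply Rle_trans with (sumR (list_prod (boxlist d N) (zr N)) (fun n => Pk (fst n) * h0 (snd n))).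
  - apply Rle_trans with (sumR G (fun n => Pk (fst n) * h0 (snd n))).
    + apply sumR_le. intros n Hn. apply (w_inv_bound d); auto. eapply fin_valid; eauto.
    + apply sumR_incl. apply HG.
      * intros [k j] Hn. destruct (Nmax_spec G (k,j) Hn) as [Hj Hk]. apply in_prod.
        apply box_in. apply (fin_valid _ _ _ HG Hn). exact Hk. apply zr_in. exact Hj.
      * intros x _; pose proof (Pk_pos (fst x)); pose proof (h0_pos (snd x)); nra.
  - rewrite sumR_prod, box_sum. pose proof (zr_sum N). pose proof (zr_sum_pos N).
    assert (0 < 4 / (INR N + 1)) by (apply Rdiv_lt_0_compat; [lra| pose proof (pos_INR N); lra]).
    unfold Zlat. simpl. rewrite Rmult_comm. apply Rmult_le_compat; try lra.
    apply pow_le; auto. apply pow_incr; lra. Qed.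

Definition sub (n n1 : I) : I := (subZ (fst n) (fst n1), (snd n - snd n1)%Z).

Lemma subZ_cons a k b k1 : subZ (a :: k) (b :: k1) = (a - b)%Z :: subZ k k1.
Proof. reflexivity. Qed.
Lemma length_subZ k k1 : length k1 = length k -> length (subZ k k1) = length k.
Proof. revert k1; induction k; destruct k1; cbn [length]; intros H; try discriminate; auto.
  rewrite subZ_cons; simpl. f_equal. apply IHk. lia. Qed.
Lemma subZ_inj_l k k' k1 : length k = length k1 -> length k' = length k1 -> subZ k k1 = subZ k' k1 -> k = k'.
Proof. revert k' k1; induction k; destruct k', k1; cbn [length]; intros H1 H2 H3; try discriminate; auto.
  rewrite !subZ_cons in H3. injection H3; intros. f_equal. lia. apply (IHk k' k1); auto. Qed.
Lemma subZ_inj_r k k1 k1' : length k1 = length k -> length k1' = length k -> subZ k k1 = subZ k k1' -> k1 = k1'.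
Proof. revert k1 k1'; induction k; destruct k1, k1'; cbn [length]; intros H1 H2 H3; try discriminate; auto.
  rewrite !subZ_cons in H3. injection H3; intros. f_equal. lia. apply (IHk k1 k1'); auto. Qed.
Lemma absk_cons a k : absk (a :: k) = Rabs (IZR a) + absk k. Proof. reflexivity. Qed.
Lemma absk_sub k k1 : length k1 = length k -> absk k <= absk k1 + absk (subZ k k1).
Proof. revert k1; induction k; destruct k1; cbn [length]; intros H; try discriminate. unfold absk; simpl; lra.
  rewrite subZ_cons, !absk_cons. specialize (IHk k1 ltac:(lia)). rewrite minus_IZR.
  pose proof (Rabs_triang (IZR z) (IZR a - IZR z)). replace (IZR z + (IZR a - IZR z)) with (IZR a) in H0 by ring. lra. Qed.

Lemma sub_valid d n n1 : length (fst n) = d -> length (fst n1) = d -> length (fst (sub n n1)) = d.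
Proof. intros. unfold sub; simpl. rewrite length_subZ; lia. Qed.

Definition he (rho : R) (n : I) : R := exp (rho * (absk (fst n) + Rabs (IZR (snd n)))).
Definition hp (m : R) (n : I) : R := Rpower (baseI n) (m / 2).
Definition hv rho m n := he rho n * hp m n.
Lemma he_pos rho n : 0 < he rho n. Proof. apply exp_pos. Qed.
Lemma hp_pos m n : 0 < hp m n. Proof. apply exp_pos. Qed.
Lemma hv_pos rho m n : 0 < hv rho m n. Proof. unfold hv; pose proof (he_pos rho n); pose proof (hp_pos m n); nra. Qed.
Lemma hp_sq m n : hp m n ^ 2 = Rpower (baseI n) m.
Proof. unfold hp. simpl. rewrite Rmult_1_r, <- Rpower_plus. f_equal; field. Qed.
Lemma wt_hv rho m n : wt rho m n = hv rho m n ^ 2.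
Proof. unfold wt, weight, hv, he. rewrite Rpow_mult_distr, hp_sq. f_equal. simpl. rewrite Rmult_1_r, <- exp_plus. f_equal. ring. Qed.

Lemma exp_mono x y : x <= y -> exp x <= exp y.
Proof. intros [H|H]. left; apply exp_increasing; auto. subst; lra. Qed.

Lemma he_sub rho n n1 : 0 <= rho -> length (fst n1) = length (fst n) -> he rho n <= he rho n1 * he rho (sub n n1).
Proof. intros Hr Hl. unfold he. rewrite <- exp_plus. apply exp_mono.
  assert (A := absk_sub _ _ Hl). unfold sub; cbn [fst snd]. rewrite minus_IZR.
  pose proof (Rabs_triang (IZR (snd n1)) (IZR (snd n) - IZR (snd n1))) as T.
  replace (IZR (snd n1) + (IZR (snd n) - IZR (snd n1))) with (IZR (snd n)) in T by ring.
  nra. Qed.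

Definition C4 (m : R) := Rpower 4 (m / 2).
Lemma hp_sub m n n1 : 0 <= m -> length (fst n1) = length (fst n) -> hp m n <= C4 m * (hp m n1 + hp m (sub n n1)).
Proof. intros Hm Hl. assert (A := absk_sub _ _ Hl).
  pose proof (absk_ge0 (fst n)). pose proof (absk_ge0 (fst n1)). pose proof (absk_ge0 (subZ (fst n) (fst n1))).
  assert (B : baseI n <= 4 * Rmax (baseI n1) (baseI (sub n n1))).
  { apply Rle_trans with (2 * baseI n1 + 2 * baseI (sub n n1)).
    - unfold baseI, sub; cbn [fst snd]. rewrite minus_IZR.
      set (a := absk (fst n)) in *. set (a1 := absk (fst n1)) in *. set (a2 := absk (subZ (fst n) (fst n1))) in *.
      set (j := IZR (snd n)). set (j1 := IZR (snd n1)).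
      assert (a ^ 2 <= (a1 + a2) ^ 2) by (apply pow_incr; lra).
      assert (j ^ 2 <= 2 * j1 ^ 2 + 2 * (j - j1) ^ 2) by (pose proof (pow2_ge_0 (j1 - (j - j1))); nra).
      assert ((a1 + a2) ^ 2 <= 2 * a1 ^ 2 + 2 * a2 ^ 2) by (pose proof (pow2_ge_0 (a1 - a2)); nra). lra.
    - pose proof (Rmax_l (baseI n1) (baseI (sub n n1))). pose proof (Rmax_r (baseI n1) (baseI (sub n n1))). lra. }
  pose proof (baseI_ge1 n). pose proof (baseI_ge1 n1). pose proof (baseI_ge1 (sub n n1)).
  unfold hp, C4. apply Rle_trans with (Rpower (4 * Rmax (baseI n1) (baseI (sub n n1))) (m / 2)).
  apply Rle_Rpower_l; lra.
  rewrite <- Rpower_mult_distr by (first [lra | (apply Rlt_le_trans with (baseI n1); [lra|apply Rmax_l])]).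
  apply Rmult_le_compat_l. left; apply exp_pos.
  pose proof (exp_pos (m / 2 * ln (baseI n1))). pose proof (exp_pos (m / 2 * ln (baseI (sub n n1)))).
  unfold Rmax; destruct (Rle_dec _ _); unfold Rpower in *; lra. Qed.

Lemma hv_sub rho m n n1 : 0 <= rho -> 0 <= m -> length (fst n1) = length (fst n) ->
  hv rho m n <= C4 m * (hv rho m n1 * he rho (sub n n1) + he rho n1 * hv rho m (sub n n1)).
Proof. intros Hr Hm Hl. unfold hv. pose proof (he_sub rho n n1 Hr Hl). pose proof (hp_sub m n n1 Hm Hl).
  pose proof (he_pos rho n). pose proof (hp_pos m n). pose proof (he_pos rho n1). pose proof (he_pos rho (sub n n1)).
  pose proof (hp_pos m n1). pose proof (hp_pos m (sub n n1)).
  apply Rle_trans with ((he rho n1 * he rho (sub n n1)) * (C4 m * (hp m n1 + hp m (sub n n1)))).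
  apply Rmult_le_compat; lra. lra. Qed.

Lemma sumR_zero G f : (forall x, In x G -> 0 <= f x) -> sumR G f = 0 -> forall x, In x G -> f x = 0.
Proof. induction G; simpl; intros Hp Hs x Hx; [contradiction|]. rewrite sumR_cons in Hs.
  assert (0 <= sumR G f) by (apply sumR_nonneg; intros; apply Hp; right; auto).
  assert (0 <= f a) by (apply Hp; left; auto).
  destruct Hx as [<-|Hx]. lra. apply IHG; [intros; apply Hp; right; auto|lra|auto]. Qed.

Lemma CS3 G a b c : (forall x, In x G -> 0 <= c x) ->
  (sumR G (fun x => a x * b x * c x)) ^ 2 <= sumR G (fun x => a x ^ 2 * c x) * sumR G (fun x => b x ^ 2 * c x).
Proof. intros Hc. set (S := sumR G (fun x => b x ^ 2 * c x)). set (X := sumR G (fun x => a x * b x * c x)).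
  set (P := sumR G (fun x => a x ^ 2 * c x)).
  assert (HS : 0 <= S) by (apply sumR_nonneg; intros; pose proof (Hc x H); pose proof (pow2_ge_0 (b x)); nra).
  assert (HP : 0 <= P) by (apply sumR_nonneg; intros; pose proof (Hc x H); pose proof (pow2_ge_0 (a x)); nra).
  assert (E : sumR G (fun x => c x * (a x * S - b x * X) ^ 2) = S * (S * P - X ^ 2)).
  { rewrite (sumR_ext G _ (fun x => (S ^ 2 * (a x ^ 2 * c x) + (- 2 * S * X) * (a x * b x * c x)) + X ^ 2 * (b x ^ 2 * c x)))
      by (intros; ring).
    rewrite !sumR_plus, !sumR_scal. fold S X P. ring. }
  assert (N : 0 <= sumR G (fun x => c x * (a x * S - b x * X) ^ 2)).
  { apply sumR_nonneg; intros. pose proof (Hc x H); pose proof (pow2_ge_0 (a x * S - b x * X)); nra. }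
  destruct (Req_dec S 0) as [S0|S0].
  - assert (X = 0).
    { unfold X. rewrite (sumR_ext G _ (fun _ => 0)). clear. induction G; auto. rewrite sumR_cons, IHG; ring.
      intros x Hx. assert (Z := sumR_zero G (fun x => b x ^ 2 * c x)).
      assert (b x ^ 2 * c x = 0). { apply Z; auto. intros; pose proof (Hc x0 H); pose proof (pow2_ge_0 (b x0)); nra. }
      pose proof (Hc x Hx). assert ((b x * c x) ^ 2 = 0) by nra. assert (b x * c x = 0) by nra.
      nra. }
    rewrite H. nra.
  - assert (0 < S) by lra. rewrite E in N. assert (0 <= S * P - X ^ 2) by (apply (Rmult_le_reg_l S); nra). nra. Qed.

Lemma NoDup_map_on (f : I -> I) l : (forall x y, In x l -> In y l -> f x = f y -> x = y) -> NoDup l -> NoDup (map f l).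
Proof. induction l; intros Hi Hn; simpl; constructor.
  - intros Hin. apply in_map_iff in Hin. destruct Hin as [y [Hy Hyl]].
    inversion Hn; subst. assert (y = a) by (apply Hi; simpl; auto). subst; contradiction.
  - inversion Hn; subst. apply IHl; auto. intros; apply Hi; simpl; auto. Qed.

Lemma fin_shift1 d n G : length (fst n) = d -> fin_idx d G -> fin_idx d (map (sub n) G).
Proof. intros Hn HG. split.
  - apply NoDup_map_on; [|apply HG]. intros [x1 x2] [y1 y2] Hx Hy E. unfold sub in E; simpl in E.
    injection E; intros E2 E1. pose proof (fin_valid _ _ _ HG Hx); pose proof (fin_valid _ _ _ HG Hy). simpl in *.
    f_equal. apply (subZ_inj_r (fst n)); auto; lia. lia.
  - apply Forall_forall. intros x Hx. apply in_map_iff in Hx. destruct Hx as [y [<- Hy]].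
    unfold valid_idx. apply sub_valid; auto. eapply fin_valid; eauto. Qed.

Lemma fin_shift2 d n1 F : length (fst n1) = d -> fin_idx d F -> fin_idx d (map (fun n => sub n n1) F).
Proof. intros Hn HF. split.
  - apply NoDup_map_on; [|apply HF]. intros [x1 x2] [y1 y2] Hx Hy E. unfold sub in E; simpl in E.
    injection E; intros E2 E1. pose proof (fin_valid _ _ _ HF Hx); pose proof (fin_valid _ _ _ HF Hy). simpl in *.
    f_equal. apply (subZ_inj_l _ _ (fst n1)); auto; lia. lia.
  - apply Forall_forall. intros x Hx. apply in_map_iff in Hx. destruct Hx as [y [<- Hy]].
    unfold valid_idx. apply sub_valid; auto. eapply fin_valid; eauto. Qed.

Definition aX rho m (X : Coef) n := cm X n * hv rho m n.
Definition bX rho (X : Coef) n := cm X n * he rho n.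
Lemma aX_ge0 rho m X n : 0 <= aX rho m X n.
Proof. unfold aX, cm. pose proof (Cmod_ge_0 (X (fst n) (snd n))); pose proof (hv_pos rho m n); nra. Qed.
Lemma bX_ge0 rho X n : 0 <= bX rho X n.
Proof. unfold bX, cm. pose proof (Cmod_ge_0 (X (fst n) (snd n))); pose proof (he_pos rho n); nra. Qed.
Lemma cm_ge0 X n : 0 <= cm X n. Proof. apply Cmod_ge_0. Qed.

Lemma sum_a d rho m X S G : bnd d rho m (cm X) S -> fin_idx d G -> sumR G (fun n => aX rho m X n ^ 2) <= S.
Proof. intros H HG. eapply Rle_trans; [|apply (H G HG)]. right. apply sumR_ext. intros. unfold aX. rewrite wt_hv. ring. Qed.

Lemma sum_b d rho m X S G : INR d + 1 <= m -> bnd d rho m (cm X) S -> 0 <= S -> fin_idx d G ->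
  sumR G (bX rho X) <= sqrt (Zlat d * S).
Proof. intros Hm H HS HG.
  assert (E : sumR G (bX rho X) = sumR G (fun n => aX rho m X n * / hp m n * 1)).
  { apply sumR_ext. intros. unfold aX, bX, hv. field. pose proof (hp_pos m x); lra. }
  assert (C := CS3 G (aX rho m X) (fun n => / hp m n) (fun _ => 1) ltac:(intros; lra)). cbv beta in C. rewrite <- E in C.
  assert (Z1 : sumR G (fun x => (/ hp m x) ^ 2 * 1) <= Zlat d).
  { eapply Rle_trans; [|apply (lattice_bound d m G Hm HG)]. right; apply sumR_ext. intros.
    rewrite <- hp_sq. field. pose proof (hp_pos m x); lra. }
  assert (Z2 : sumR G (fun x => aX rho m X x ^ 2 * 1) <= S).
  { eapply Rle_trans; [|apply (sum_a d rho m X S G H HG)]. right; apply sumR_ext; intros; ring. }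
  assert (0 <= sumR G (bX rho X)) by (apply sumR_nonneg; intros; apply bX_ge0).
  assert (0 <= sumR G (fun x => (/ hp m x) ^ 2 * 1)) by (apply sumR_nonneg; intros; nra).
  rewrite <- (sqrt_pow2 (sumR G (bX rho X))) by auto. apply sqrt_le_1_alt.
  apply Rle_trans with (sumR G (fun x => aX rho m X x ^ 2 * 1) * sumR G (fun x => (/ hp m x) ^ 2 * 1)); auto.
  assert (0 <= sumR G (fun x => aX rho m X x ^ 2 * 1)) by (apply sumR_nonneg; intros; nra).
  rewrite Rmult_comm. apply Rmult_le_compat; auto. Qed.

Lemma conv_abs_bound d rho m A B SA SB n G : 0 <= rho -> 0 <= m -> length (fst n) = d ->
  bnd d rho m (cm A) SA -> bnd d rho m (cm B) SB -> fin_idx d G ->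
  sumR G (fun n1 => cm A n1 * cm B (sub n n1)) <= (SA + SB) / 2.
Proof. intros Hr Hm Hn HA HB HG.
  assert (S1 := HA G HG). assert (S2 := HB _ (fin_shift1 d n G Hn HG)). rewrite sumR_map in S2.
  apply Rle_trans with (sumR G (fun n1 => (cm A n1 ^ 2 * wt rho m n1 + cm B (sub n n1) ^ 2 * wt rho m (sub n n1)) / 2)).
  - apply sumR_le. intros x _. pose proof (wt_ge1 rho m x Hr Hm). pose proof (wt_ge1 rho m (sub n x) Hr Hm).
    pose proof (cm_ge0 A x). pose proof (cm_ge0 B (sub n x)). pose proof (pow2_ge_0 (cm A x - cm B (sub n x))).
    assert (cm A x ^ 2 <= cm A x ^ 2 * wt rho m x) by nra.
    assert (cm B (sub n x) ^ 2 <= cm B (sub n x) ^ 2 * wt rho m (sub n x)) by nra. nra.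
  - rewrite (sumR_ext G _ (fun n1 => / 2 * (cm A n1 ^ 2 * wt rho m n1) + / 2 * (cm B (sub n n1) ^ 2 * wt rho m (sub n n1)))) by (intros; field).
    rewrite sumR_plus, !sumR_scal. lra. Qed.

Lemma conv_pt d rho m A B n G : 0 <= rho -> 0 <= m -> length (fst n) = d -> fin_idx d G ->
  hv rho m n * sumR G (fun n1 => cm A n1 * cm B (sub n n1)) <=
  C4 m * (sumR G (fun n1 => aX rho m A n1 * bX rho B (sub n n1)) + sumR G (fun n1 => bX rho A n1 * aX rho m B (sub n n1))).
Proof. intros Hr Hm Hn HG. rewrite <- sumR_plus, <- !sumR_scal. apply sumR_le. intros x Hx.
  assert (Hl : length (fst x) = length (fst n)) by (rewrite (fin_valid _ _ _ HG Hx); auto).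
  pose proof (hv_sub rho m n x Hr Hm Hl). pose proof (cm_ge0 A x). pose proof (cm_ge0 B (sub n x)).
  unfold aX, bX. assert (0 <= cm A x * cm B (sub n x)) by nra.
  apply Rle_trans with (C4 m * (hv rho m x * he rho (sub n x) + he rho x * hv rho m (sub n x)) * (cm A x * cm B (sub n x))).
  apply Rmult_le_compat_r; auto. right; ring. Qed.

Lemma F5a d rho m A B SA SB F G : INR d + 1 <= m -> 0 <= rho -> 0 <= m ->
  bnd d rho m (cm A) SA -> bnd d rho m (cm B) SB -> 0 <= SB -> fin_idx d F -> fin_idx d G ->
  sumR F (fun n => (sumR G (fun n1 => aX rho m A n1 * bX rho B (sub n n1))) ^ 2) <= Zlat d * SB * SA.
Proof. intros Hm' Hr Hm HA HB HSB HF HG. set (LB := sqrt (Zlat d * SB)).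
  assert (HZ : 0 <= Zlat d) by (unfold Zlat; apply pow_le; lra).
  assert (LB2 : LB ^ 2 = Zlat d * SB) by (unfold LB; apply pow2_sqrt; nra).
  assert (LB0 : 0 <= LB) by apply sqrt_pos.
  apply Rle_trans with (sumR F (fun n => LB * sumR G (fun n1 => aX rho m A n1 ^ 2 * bX rho B (sub n n1)))).
  - apply sumR_le. intros n Hn. pose proof (fin_valid _ _ _ HF Hn) as Hv.
    assert (C := CS3 G (aX rho m A) (fun _ => 1) (fun n1 => bX rho B (sub n n1)) ltac:(intros; apply bX_ge0)).
    cbv beta in C.
    rewrite (sumR_ext G (fun x => aX rho m A x * 1 * bX rho B (sub n x)) (fun n1 => aX rho m A n1 * bX rho B (sub n n1))) in C by (intros; ring).
    rewrite (sumR_ext G (fun x => 1 ^ 2 * bX rho B (sub n x)) (fun n1 => bX rho B (sub n n1))) in C by (intros; ring).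
    assert (Hb : sumR G (fun n1 => bX rho B (sub n n1)) <= LB).
    { assert (X := sum_b d rho m B SB _ Hm' HB HSB (fin_shift1 d n G Hv HG)). rewrite sumR_map in X. auto. }
    assert (0 <= sumR G (fun x => aX rho m A x ^ 2 * bX rho B (sub n x))).
    { apply sumR_nonneg; intros; pose proof (aX_ge0 rho m A x); pose proof (bX_ge0 rho B (sub n x)); nra. }
    eapply Rle_trans; [apply C|]. rewrite (Rmult_comm LB). apply Rmult_le_compat_l; auto.
  - rewrite sumR_scal, sumR_swap.
    apply Rle_trans with (LB * sumR G (fun n1 => aX rho m A n1 ^ 2 * LB)).
    + apply Rmult_le_compat_l; auto. apply sumR_le. intros n1 Hn1. pose proof (fin_valid _ _ _ HG Hn1) as Hv.
      idtac.
      rewrite sumR_scal. apply Rmult_le_compat_l. apply pow2_ge_0.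
      assert (X := sum_b d rho m B SB _ Hm' HB HSB (fin_shift2 d n1 F Hv HF)). rewrite sumR_map in X. auto.
    + rewrite (sumR_ext G _ (fun n1 => LB * aX rho m A n1 ^ 2)) by (intros; ring). rewrite sumR_scal.
      assert (X := sum_a d rho m A SA G HA HG).
      replace (Zlat d * SB * SA) with (LB * (LB * SA)) by (rewrite <- LB2; ring).
      apply Rmult_le_compat_l; auto. apply Rmult_le_compat_l; auto. Qed.

Lemma F5b d rho m A B SA SB F G : INR d + 1 <= m -> 0 <= rho -> 0 <= m ->
  bnd d rho m (cm A) SA -> bnd d rho m (cm B) SB -> 0 <= SA -> fin_idx d F -> fin_idx d G ->
  sumR F (fun n => (sumR G (fun n1 => bX rho A n1 * aX rho m B (sub n n1))) ^ 2) <= Zlat d * SA * SB.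
Proof. intros Hm' Hr Hm HA HB HSA HF HG. set (LA := sqrt (Zlat d * SA)).
  assert (HZ : 0 <= Zlat d) by (unfold Zlat; apply pow_le; lra).
  assert (LA2 : LA ^ 2 = Zlat d * SA) by (unfold LA; apply pow2_sqrt; nra).
  assert (LA0 : 0 <= LA) by apply sqrt_pos.
  assert (HbA : sumR G (bX rho A) <= LA) by (apply (sum_b d rho m A SA G Hm' HA HSA HG)).
  apply Rle_trans with (sumR F (fun n => LA * sumR G (fun n1 => aX rho m B (sub n n1) ^ 2 * bX rho A n1))).
  - apply sumR_le. intros n Hn.
    assert (C := CS3 G (fun n1 => aX rho m B (sub n n1)) (fun _ => 1) (bX rho A) ltac:(intros; apply bX_ge0)).
    cbv beta in C.
    rewrite (sumR_ext G (fun x => aX rho m B (sub n x) * 1 * bX rho A x) (fun n1 => bX rho A n1 * aX rho m B (sub n n1))) in C by (intros; ring).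
    rewrite (sumR_ext G (fun x => 1 ^ 2 * bX rho A x) (bX rho A)) in C by (intros; ring).
    assert (0 <= sumR G (fun x => aX rho m B (sub n x) ^ 2 * bX rho A x)).
    { apply sumR_nonneg; intros; pose proof (aX_ge0 rho m B (sub n x)); pose proof (bX_ge0 rho A x); nra. }
    eapply Rle_trans; [apply C|]. rewrite (Rmult_comm LA). apply Rmult_le_compat_l; auto.
  - rewrite sumR_scal, sumR_swap.
    apply Rle_trans with (LA * sumR G (fun n1 => SB * bX rho A n1)).
    + apply Rmult_le_compat_l; auto. apply sumR_le. intros n1 Hn1. pose proof (fin_valid _ _ _ HG Hn1) as Hv.
      rewrite (sumR_ext F _ (fun n => bX rho A n1 * aX rho m B (sub n n1) ^ 2)) by (intros; ring).
      rewrite sumR_scal. rewrite Rmult_comm. apply Rmult_le_compat_r. apply bX_ge0.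
      assert (X := sum_a d rho m B SB _ HB (fin_shift2 d n1 F Hv HF)). rewrite sumR_map in X. auto.
    + rewrite sumR_scal.
      replace (Zlat d * SA * SB) with (LA * (SB * LA)) by (rewrite <- LA2; ring).
      apply Rmult_le_compat_l; auto. assert (0 <= SB) by (pose proof (HB nil (fin_nil d)); unfold sumR in *; simpl in *; lra).
      apply Rmult_le_compat_l; auto. Qed.

Definition Kc (d : nat) (m : R) := 4 * C4 m ^ 2 * Zlat d.
Lemma Kc_ge0 d m : 0 <= Kc d m.
Proof. unfold Kc, Zlat. pose proof (pow2_ge_0 (C4 m)). assert (0 <= 5 ^ S d) by (apply pow_le; lra). nra. Qed.

Lemma fin_sum_conv d rho m A B SA SB F G : INR d + 1 <= m -> 0 <= rho -> 0 <= m ->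
  bnd d rho m (cm A) SA -> bnd d rho m (cm B) SB -> 0 <= SA -> 0 <= SB -> fin_idx d F -> fin_idx d G ->
  sumR F (fun n => (sumR G (fun n1 => cm A n1 * cm B (sub n n1))) ^ 2 * wt rho m n) <= Kc d m * SA * SB.
Proof. intros Hm' Hr Hm HA HB HSA HSB HF HG.
  set (X := fun n => sumR G (fun n1 => aX rho m A n1 * bX rho B (sub n n1))).
  set (Y := fun n => sumR G (fun n1 => bX rho A n1 * aX rho m B (sub n n1))).
  apply Rle_trans with (sumR F (fun n => 2 * C4 m ^ 2 * (X n ^ 2) + 2 * C4 m ^ 2 * (Y n ^ 2))).
  - apply sumR_le. intros n Hn. pose proof (fin_valid _ _ _ HF Hn) as Hv.
    assert (P := conv_pt d rho m A B n G Hr Hm Hv HG). fold (X n) (Y n) in P.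
    assert (0 <= sumR G (fun n1 => cm A n1 * cm B (sub n n1))).
    { apply sumR_nonneg; intros; pose proof (cm_ge0 A x); pose proof (cm_ge0 B (sub n x)); nra. }
    pose proof (hv_pos rho m n). rewrite wt_hv.
    assert (0 <= hv rho m n * sumR G (fun n1 => cm A n1 * cm B (sub n n1))) by nra.
    assert ((hv rho m n * sumR G (fun n1 => cm A n1 * cm B (sub n n1))) ^ 2 <= (C4 m * (X n + Y n)) ^ 2) by (apply pow_incr; lra).
    pose proof (pow2_ge_0 (X n - Y n)). pose proof (pow2_ge_0 (C4 m)).
    assert ((C4 m * (X n + Y n)) ^ 2 <= 2 * C4 m ^ 2 * X n ^ 2 + 2 * C4 m ^ 2 * Y n ^ 2).
    { replace ((C4 m * (X n + Y n)) ^ 2) with (C4 m ^ 2 * (X n + Y n) ^ 2) by ring.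
      replace (2 * C4 m ^ 2 * X n ^ 2 + 2 * C4 m ^ 2 * Y n ^ 2) with (C4 m ^ 2 * (2 * X n ^ 2 + 2 * Y n ^ 2)) by ring.
      apply Rmult_le_compat_l; nra. }
    replace ((sumR G (fun n1 => cm A n1 * cm B (sub n n1))) ^ 2 * hv rho m n ^ 2) with
      ((hv rho m n * sumR G (fun n1 => cm A n1 * cm B (sub n n1))) ^ 2) by ring. lra.
  - rewrite sumR_plus, !sumR_scal.
    assert (A1 := F5a d rho m A B SA SB F G Hm' Hr Hm HA HB HSB HF HG). fold X in A1.
    assert (A2 := F5b d rho m A B SA SB F G Hm' Hr Hm HA HB HSA HF HG). fold Y in A2.
    pose proof (pow2_ge_0 (C4 m)). unfold Kc.
    apply Rle_trans with (2 * C4 m ^ 2 * (Zlat d * SB * SA) + 2 * C4 m ^ 2 * (Zlat d * SA * SB)).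
    apply Rplus_le_compat; apply Rmult_le_compat_l; auto; nra. right; ring. Qed.

Definition conv (d : nat) (A B : Coef) : Coef := fun k j =>
  csum d (fun kj1 => Cmult (A (fst kj1) (snd kj1)) (B (subZ k (fst kj1)) (j - snd kj1)%Z)).
Lemma sqU_conv d U : sqU d U = conv d U U. Proof. reflexivity. Qed.
Definition cg (A B : Coef) (n : I) : I -> C := fun n1 => Cmult (A (fst n1) (snd n1)) (B (fst (sub n n1)) (snd (sub n n1))).
Lemma cg_mod A B n n1 : Cmod (cg A B n n1) = cm A n1 * cm B (sub n n1).
Proof. unfold cg. rewrite Cmod_mult. reflexivity. Qed.

Lemma conv_has d rho m A B SA SB n : 0 <= rho -> 0 <= m -> length (fst n) = d ->
  bnd d rho m (cm A) SA -> bnd d rho m (cm B) SB -> has_sumC d (cg A B n) (conv d A B (fst n) (snd n)).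
Proof. intros Hr Hm Hn HA HB.
  destruct (abs_summable d (cg A B n) ((SA + SB) / 2)) as [S HS].
  { intros G HG. rewrite (sumR_ext G _ (fun n1 => cm A n1 * cm B (sub n n1))) by (intros; apply cg_mod).
    apply (conv_abs_bound d rho m A B SA SB n G); auto. }
  unfold conv. rewrite (csum_eq d _ S); auto. Qed.

Lemma collect d (Q : I -> list I -> Prop) F :
  (forall n, In n F -> exists G0, fin_idx d G0 /\ forall G, fin_idx d G -> incl G0 G -> Q n G) ->
  exists G0, fin_idx d G0 /\ forall G, fin_idx d G -> incl G0 G -> forall n, In n F -> Q n G.
Proof. induction F; intros H.
  - exists nil; split; [apply fin_nil|]. intros; contradiction.
  - destruct (H a (or_introl eq_refl)) as [G1 [HG1 P1]].
    destruct IHF as [G2 [HG2 P2]]. intros; apply H; right; auto.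
    exists (funion G1 G2); split; [apply funion_fin; auto|]. intros G HG Hinc n [<-|Hn].
    apply P1; auto. intros y Hy; apply Hinc, funion_l; auto.
    apply P2; auto. intros y Hy; apply Hinc, funion_r; auto. Qed.

Lemma eps_close X Y W : 0 <= W -> (forall eps, 0 < eps -> eps <= 1 -> X <= Y + eps * W) -> X <= Y.
Proof. intros HW H. apply Rnot_lt_le. intros Hc.
  set (e := Rmin 1 ((X - Y) / (2 * (W + 1)))).
  assert (0 < (X - Y) / (2 * (W + 1))) by (apply Rdiv_lt_0_compat; lra).
  assert (0 < e) by (unfold e; apply Rmin_glb_lt; lra).
  assert (e <= 1) by apply Rmin_l. assert (e <= (X - Y) / (2 * (W + 1))) by apply Rmin_r.
  specialize (H e H1 H2).
  assert (e * W <= (X - Y) / (2 * (W + 1)) * W) by (apply Rmult_le_compat_r; auto).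
  assert ((X - Y) / (2 * (W + 1)) * W < X - Y).
  { apply Rmult_lt_reg_l with (2 * (W + 1)). lra.
    replace (2 * (W + 1) * ((X - Y) / (2 * (W + 1)) * W)) with ((X - Y) * W) by (field; lra). nra. }
  lra. Qed.

Lemma conv_bnd d rho m A B SA SB : INR d + 1 <= m -> 0 <= rho -> 0 <= m ->
  bnd d rho m (cm A) SA -> bnd d rho m (cm B) SB -> 0 <= SA -> 0 <= SB ->
  bnd d rho m (cm (conv d A B)) (2 * (Kc d m * SA * SB)).
Proof. intros Hm' Hr Hm HA HB HSA HSB F HF.
  apply (eps_close _ _ (2 * sumR F (wt rho m))). 
  { assert (0 <= sumR F (wt rho m)) by (apply sumR_nonneg; intros; pose proof (wt_ge1 rho m x Hr Hm); lra). lra. }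
  intros eps He He1.
  destruct (collect d (fun n G => Cmod (Cminus (sumC G (cg A B n)) (conv d A B (fst n) (snd n))) < eps) F) as [G0 [HG0 P]].
  { intros n Hn. apply (conv_has d rho m A B SA SB n Hr Hm (fin_valid _ _ _ HF Hn) HA HB). auto. }
  specialize (P G0 HG0 (incl_refl _)).
  apply Rle_trans with (sumR F (fun n => 2 * ((sumR G0 (fun n1 => cm A n1 * cm B (sub n n1))) ^ 2 * wt rho m n) + eps * (2 * wt rho m n))).
  - apply sumR_le. intros n Hn. specialize (P n Hn).
    pose proof (sumC_mod G0 (cg A B n)).
    rewrite (sumR_ext G0 _ (fun n1 => cm A n1 * cm B (sub n n1))) in H by (intros; apply cg_mod).
    pose proof (Cmod_tri3 (conv d A B (fst n) (snd n)) (sumC G0 (cg A B n)) 0).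
    replace (Cminus (conv d A B (fst n) (snd n)) 0) with (conv d A B (fst n) (snd n)) in H0 by ring.
    replace (Cminus (sumC G0 (cg A B n)) 0) with (sumC G0 (cg A B n)) in H0 by ring.
    rewrite Cmod_sym in H0. unfold cm at 1. destruct n as [k j]. cbn [fst snd] in *.
    pose proof (Cmod_ge_0 (conv d A B k j)). pose proof (wt_ge1 rho m (k,j) Hr Hm).
    set (c := Cmod (conv d A B k j)) in *. set (s := sumR G0 (fun n1 => cm A n1 * cm B (sub (k, j) n1))) in *.
    assert (c ^ 2 <= 2 * s ^ 2 + 2 * eps ^ 2).
    { assert (0 <= s + eps). pose proof (Cmod_ge_0 (sumC G0 (cg A B (k,j)))). lra.
      assert (c <= s + eps) by lra.
      assert (c ^ 2 <= (s + eps) ^ 2) by (apply pow_incr; lra). pose proof (pow2_ge_0 (s - eps)). nra. }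
    assert (eps ^ 2 <= eps) by nra. nra.
  - rewrite sumR_plus, !sumR_scal. 
    assert (X := fin_sum_conv d rho m A B SA SB F G0 Hm' Hr Hm HA HB HSA HSB HF HG0). lra. Qed.

Definition qq (w : list R) (k : list Z) := dotZR k w.
Definition AA (w : list R) (beta : R) (k : list Z) (j : Z) := qq w k ^ 2 + beta * IZR j ^ 4 - IZR j ^ 2.

Lemma Nsym_eq w beta e k j : Nsym w beta e k j = Cplus (Cmult (Copp e) (RtoC (AA w beta k j))) (Cmult Ci (RtoC (qq w k))).
Proof. destruct e as [x y]. unfold Nsym, AA, qq. apply injective_projections; simpl; ring. Qed.

Lemma Cmod_sq (z : C) : Cmod z ^ 2 = fst z ^ 2 + snd z ^ 2.
Proof. unfold Cmod. rewrite pow2_sqrt; auto. pose proof (pow2_ge_0 (fst z)); pose proof (pow2_ge_0 (snd z)); lra. Qed.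

Lemma Nmod2 w beta e k j : Cmod (Nsym w beta e k j) ^ 2 =
  Cmod e ^ 2 * AA w beta k j ^ 2 + qq w k ^ 2 - 2 * AA w beta k j * qq w k * snd e.
Proof. rewrite Nsym_eq, !Cmod_sq. destruct e as [x y]. simpl. ring. Qed.

Lemma sq_le a b C : 0 <= a -> 0 <= b -> 0 <= C -> a ^ 2 <= C * b ^ 2 -> a <= (C + 1) * b.
Proof. intros Ha Hb HC H. apply Rnot_lt_le; intros Hc.
  assert (0 <= (C + 1) * b) by nra. assert (((C + 1) * b) ^ 2 < a ^ 2) by (simpl; rewrite !Rmult_1_r; apply Rmult_le_0_lt_compat; lra).
  assert (C * b ^ 2 <= ((C + 1) * b) ^ 2) by (pose proof (pow2_ge_0 b); nra). lra. Qed.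

Lemma delta_lemma beta : 0 < beta -> (forall n : Z, / sqrt beta <> IZR n) ->
  exists delta, 0 < delta /\ forall j : Z, j <> 0%Z -> delta <= beta * IZR j ^ 2 - 1 \/ delta <= 1 - beta * IZR j ^ 2.
Proof. intros Hb Hn. set (t := / sqrt beta).
  assert (Hs : 0 < sqrt beta) by (apply sqrt_lt_R0; auto).
  assert (Ht : 0 < t) by (unfold t; apply Rinv_0_lt_compat; auto).
  assert (Ht2 : beta * t ^ 2 = 1).
  { unfold t. rewrite pow_inv. rewrite pow2_sqrt by lra. field. lra. }
  destruct (archimed t) as [U1 U2]. set (u := up t) in *.
  assert (U3 : IZR u - 1 < t). { destruct (Rle_lt_dec t (IZR u - 1)) as [H|H]; auto.
    exfalso. assert (IZR u - 1 = t) by lra. apply (Hn (u - 1)%Z). rewrite minus_IZR. fold t. lra. }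
  set (d0 := Rmin (t - (IZR u - 1)) (IZR u - t)).
  assert (Hd0 : 0 < d0) by (unfold d0; apply Rmin_glb_lt; lra).
  exists (beta * d0 * t). split. apply Rmult_lt_0_compat; [apply Rmult_lt_0_compat|]; auto.
  intros j Hj. set (a := IZR (Z.abs j)).
  assert (Ha : IZR j ^ 2 = a ^ 2). { unfold a. rewrite abs_IZR. rewrite <- pow2_abs. auto. }
  assert (Ha0 : 0 <= a) by (unfold a; apply IZR_le; lia).
  assert (E : beta * IZR j ^ 2 - 1 = beta * (a - t) * (a + t)). { rewrite Ha. rewrite <- Ht2. ring. }
  destruct (Z_le_gt_dec (Z.abs j) (u - 1)) as [H|H].
  - right. apply IZR_le in H. rewrite minus_IZR in H. fold a in H.
    assert (d0 <= t - a) by (unfold d0; pose proof (Rmin_l (t - (IZR u - 1)) (IZR u - t)); lra).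
    replace (1 - beta * IZR j ^ 2) with (beta * (t - a) * (a + t)) by (rewrite Ha, <- Ht2; ring).
    assert (beta * d0 * t <= beta * (t - a) * (a + t)).
    { apply Rmult_le_compat. nra. lra. apply Rmult_le_compat_l; lra. lra. } lra.
  - left. assert (Z.abs j >= u)%Z by lia. apply Z.ge_le in H0. apply IZR_le in H0. fold a in H0.
    assert (d0 <= a - t) by (unfold d0; pose proof (Rmin_r (t - (IZR u - 1)) (IZR u - t)); lra).
    rewrite E. apply Rmult_le_compat. nra. lra. apply Rmult_le_compat_l; lra. lra. Qed.

Lemma LB2 beta delta q A J E : 0 < beta -> 0 < delta -> 1 <= J ^ 2 -> 0 <= E -> E <= 4 ->
  A = q ^ 2 + beta * J ^ 4 - J ^ 2 ->
  (delta <= beta * J ^ 2 - 1 \/ delta <= 1 - beta * J ^ 2) ->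
  Rmin (delta ^ 2 / 4) (delta * beta / 8) * E * J ^ 4 <= E * A ^ 2 + q ^ 2.
Proof. intros Hb Hd HJ HE HE4 HA Hc.
  set (c1 := Rmin (delta ^ 2 / 4) (delta * beta / 8)).
  assert (c1a : c1 <= delta ^ 2 / 4) by apply Rmin_l. assert (c1b : c1 <= delta * beta / 8) by apply Rmin_r.
  assert (c1p : 0 < c1) by (apply Rmin_glb_lt; [nra|nra]).
  assert (J4 : J ^ 4 = (J ^ 2) ^ 2) by ring. pose proof (pow2_ge_0 q).
  assert (HJ4 : 0 <= J ^ 4) by nra.
  destruct Hc as [Hc|Hc].
  - assert (J ^ 2 * delta <= J ^ 2 * (beta * J ^ 2 - 1)) by (apply Rmult_le_compat_l; lra).
    assert (A >= delta * J ^ 2) by (rewrite HA; replace (beta * J ^ 4) with (J ^ 2 * (beta * J ^ 2)) by ring; nra).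
    assert (A ^ 2 >= delta ^ 2 * J ^ 4) by (rewrite J4; replace (delta ^ 2 * (J ^ 2) ^ 2) with ((delta * J ^ 2) ^ 2) by ring; apply Rle_ge, pow_incr; split; nra).
    assert (c1 * E * J ^ 4 <= delta ^ 2 * E * J ^ 4). { apply Rmult_le_compat_r; auto. apply Rmult_le_compat_r; nra. }
    nra.
  - destruct (Rle_lt_dec (delta ^ 2 / 4 * J ^ 4) (A ^ 2)) as [H1|H1].
    + assert (c1 * E * J ^ 4 <= E * (delta ^ 2 / 4 * J ^ 4)).
      { replace (c1 * E * J ^ 4) with (E * (c1 * J ^ 4)) by ring. apply Rmult_le_compat_l; auto. apply Rmult_le_compat_r; nra. }
      assert (E * (delta ^ 2 / 4 * J ^ 4) <= E * A ^ 2) by (apply Rmult_le_compat_l; auto). lra.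
    + assert (Aabs : Rabs A < delta / 2 * J ^ 2).
      { apply Rnot_le_lt. intros Hn. assert ((delta / 2 * J ^ 2) ^ 2 <= Rabs A ^ 2) by (apply pow_incr; nra).
        rewrite <- pow2_abs in H1. nra. }
      assert (q ^ 2 >= delta / 2 * J ^ 2).
      { assert (q ^ 2 = A + J ^ 2 * (1 - beta * J ^ 2)) by (rewrite HA; ring).
        pose proof (Rle_abs (- A)) as H3. rewrite Rabs_Ropp in H3.
        assert (J ^ 2 * delta <= J ^ 2 * (1 - beta * J ^ 2)) by (apply Rmult_le_compat_l; lra). lra. }
      assert (beta * J ^ 2 <= 1) by lra.
      assert (J ^ 2 >= beta * J ^ 4) by (rewrite J4; nra).
      assert (q ^ 2 >= delta / 2 * beta * J ^ 4) by nra.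
      assert (c1 * E * J ^ 4 <= delta * beta / 8 * 4 * J ^ 4). { apply Rmult_le_compat_r; auto. nra. }
      pose proof (pow2_ge_0 A). nra. Qed.

Definition inOmega sigma mu e := Omega sigma mu e.

Lemma mb_core (c1 sigma K1 K2 K4 : R) (e N : C) (q A J : R) :
  0 < c1 -> 0 < sigma -> c1 / 2 * K1 = 1 -> c1 * sigma ^ 2 / 2 * K2 = 1 -> sigma ^ 2 / 2 * K4 = 1 ->
  0 < K1 -> 0 < K2 -> 0 < K4 ->
  Cmod N ^ 2 = Cmod e ^ 2 * A ^ 2 + q ^ 2 - 2 * A * q * snd e ->
  c1 * Cmod e ^ 2 * J ^ 4 <= Cmod e ^ 2 * A ^ 2 + q ^ 2 ->
  Rabs (snd e) <= Cmod e / 2 -> 1 <= J ^ 2 -> sigma <= Cmod e ->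
  N <> RtoC 0 /\
  Cmod e * J ^ 2 <= (K1 + 1 + (K2 + 1) + 3 + (K4 + 1)) * Cmod N /\
  J ^ 2 <= (K1 + 1 + (K2 + 1) + 3 + (K4 + 1)) * Cmod N /\
  Rabs q <= (K1 + 1 + (K2 + 1) + 3 + (K4 + 1)) * Cmod N /\
  Rabs A <= (K1 + 1 + (K2 + 1) + 3 + (K4 + 1)) * Cmod N.
Proof. intros c1p Hs E1 E2 E4 P1 P2 P4 HN2 HL Hy HJ He.
  assert (s2 : 0 < sigma ^ 2) by (apply pow_lt; lra).
  assert (Ne : 0 <= Cmod e) by apply Cmod_ge_0. assert (NN : 0 <= Cmod N) by apply Cmod_ge_0.
  assert (e2 : sigma ^ 2 <= Cmod e ^ 2) by (apply pow_incr; lra).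
  assert (LB : (Cmod e ^ 2 * A ^ 2 + q ^ 2) / 2 <= Cmod N ^ 2).
  { rewrite HN2. assert (2 * Rabs (A * q * snd e) <= Cmod e * (Rabs A * Rabs q)).
    { rewrite !Rabs_mult. pose proof (Rabs_pos A); pose proof (Rabs_pos q).
      replace (2 * (Rabs A * Rabs q * Rabs (snd e))) with ((Rabs A * Rabs q) * (2 * Rabs (snd e))) by ring.
      replace (Cmod e * (Rabs A * Rabs q)) with ((Rabs A * Rabs q) * Cmod e) by ring. apply Rmult_le_compat_l; nra. }
    assert (Cmod e * (Rabs A * Rabs q) <= (Cmod e ^ 2 * A ^ 2 + q ^ 2) / 2).
    { pose proof (pow2_ge_0 (Cmod e * Rabs A - Rabs q)). rewrite <- (pow2_abs A), <- (pow2_abs q). nra. }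
    pose proof (Rle_abs (A * q * snd e)). lra. }
  assert (J4 : 1 <= J ^ 4) by (replace (J ^ 4) with (J ^ 2 * J ^ 2) by ring; nra).
  assert (HNp : 0 < Cmod N).
  { assert (0 < c1 * Cmod e ^ 2 * J ^ 4).
    { apply Rmult_lt_0_compat; [|lra]. apply Rmult_lt_0_compat; auto. lra. }
    assert (0 < Cmod N ^ 2) by lra. destruct NN as [|Hz]; auto. rewrite <- Hz in *. lra. }
  assert (HK1' : Cmod e * J ^ 2 <= (K1 + 1) * Cmod N).
  { apply sq_le. apply Rmult_le_pos; [lra|apply pow2_ge_0]. lra. lra.
    replace ((Cmod e * J ^ 2) ^ 2) with (Cmod e ^ 2 * J ^ 4) by ring.
    apply Rmult_le_reg_l with (c1 / 2). lra.
    replace (c1 / 2 * (K1 * Cmod N ^ 2)) with (Cmod N ^ 2) by (rewrite <- Rmult_assoc, E1; ring). lra. }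
  assert (HK2' : J ^ 2 <= (K2 + 1) * Cmod N).
  { apply sq_le. apply pow2_ge_0. lra. lra. replace ((J ^ 2) ^ 2) with (J ^ 4) by ring.
    assert (c1 * sigma ^ 2 * J ^ 4 <= c1 * Cmod e ^ 2 * J ^ 4) by (apply Rmult_le_compat_r; [lra|apply Rmult_le_compat_l; lra]).
    apply Rmult_le_reg_l with (c1 * sigma ^ 2 / 2). apply Rmult_lt_0_compat; [apply Rmult_lt_0_compat|]; lra.
    replace (c1 * sigma ^ 2 / 2 * (K2 * Cmod N ^ 2)) with (Cmod N ^ 2) by (rewrite <- Rmult_assoc, E2; ring). lra. }
  assert (HK3 : Rabs q <= 3 * Cmod N).
  { replace 3 with (2 + 1) by ring. apply sq_le; try lra. apply Rabs_pos. rewrite pow2_abs.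
    assert (0 <= Cmod e ^ 2 * A ^ 2) by (apply Rmult_le_pos; apply pow2_ge_0). lra. }
  assert (HK4' : Rabs A <= (K4 + 1) * Cmod N).
  { apply sq_le; try lra. apply Rabs_pos. rewrite pow2_abs.
    assert (sigma ^ 2 * A ^ 2 <= Cmod e ^ 2 * A ^ 2) by (apply Rmult_le_compat_r; [apply pow2_ge_0|lra]).
    apply Rmult_le_reg_l with (sigma ^ 2 / 2). lra.
    replace (sigma ^ 2 / 2 * (K4 * Cmod N ^ 2)) with (Cmod N ^ 2) by (rewrite <- Rmult_assoc, E4; ring).
    pose proof (pow2_ge_0 q). lra. }
  pose proof (Rabs_pos q). pose proof (Rabs_pos A).
  repeat split.
  - intros E. rewrite E, Cmod_0 in HNp. lra.
  - nra.
  - nra.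
  - nra.
  - nra. Qed.

Lemma mult_bounds w beta sigma : 0 < beta -> (forall n : Z, / sqrt beta <> IZR n) -> 0 < sigma <= 1 ->
  exists K, 0 < K /\ forall mu e k j, 2 <= mu -> Omega sigma mu e -> j <> 0%Z ->
    Nsym w beta e k j <> RtoC 0 /\
    Cmod e * IZR j ^ 2 <= K * Cmod (Nsym w beta e k j) /\
    IZR j ^ 2 <= K * Cmod (Nsym w beta e k j) /\
    Rabs (qq w k) <= K * Cmod (Nsym w beta e k j) /\
    Rabs (AA w beta k j) <= K * Cmod (Nsym w beta e k j).
Proof. intros Hb Hn Hs. destruct (delta_lemma beta Hb Hn) as [delta [Hd Hdj]].
  set (c1 := Rmin (delta ^ 2 / 4) (delta * beta / 8)).
  assert (c1p : 0 < c1) by (apply Rmin_glb_lt; [nra|nra]).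
  assert (s2 : 0 < sigma ^ 2) by (apply pow_lt; lra).
  set (K1 := 2 / c1). set (K2 := 2 / (c1 * sigma ^ 2)). set (K4 := 2 / sigma ^ 2).
  assert (P1 : 0 < K1) by (apply Rdiv_lt_0_compat; lra).
  assert (P2 : 0 < K2) by (apply Rdiv_lt_0_compat; [lra| apply Rmult_lt_0_compat; lra]).
  assert (P4 : 0 < K4) by (apply Rdiv_lt_0_compat; lra).
  assert (E1 : c1 / 2 * K1 = 1) by (unfold K1; field; lra).
  assert (E2 : c1 * sigma ^ 2 / 2 * K2 = 1) by (unfold K2; field; lra).
  assert (E4 : sigma ^ 2 / 2 * K4 = 1) by (unfold K4; field; lra).
  exists (K1 + 1 + (K2 + 1) + 3 + (K4 + 1)). split. lra.
  intros mu e k j Hmu [Ho1 [Ho2 Ho3]] Hj.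
  assert (HJ : 1 <= IZR j ^ 2).
  { destruct (Z_lt_le_dec j 0). assert (IZR j <= -1) by (apply IZR_le; lia). nra.
    assert (1 <= IZR j) by (apply IZR_le; lia). nra. }
  assert (Hy : Rabs (snd e) <= Cmod e / 2).
  { pose proof (Rabs_pos (snd e)). pose proof (abs_fst_le e). unfold Re, Im in *.
    pose proof (Rle_abs (fst e)). nra. }
  assert (e4 : Cmod e ^ 2 <= 4) by (replace 4 with (2 ^ 2) by ring; apply pow_incr; pose proof (Cmod_ge_0 e); lra).
  assert (HL := LB2 beta delta (qq w k) (AA w beta k j) (IZR j) (Cmod e ^ 2) Hb Hd HJ (pow2_ge_0 _) e4 eq_refl (Hdj j Hj)).
  fold c1 in HL.
  apply (mb_core c1 sigma K1 K2 K4 e _ (qq w k) (AA w beta k j) (IZR j)); auto; try lra.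
  apply Nmod2. Qed.

Lemma ID (e e0 A q J se s0 c1 c2 fv : C) :
  Cplus (Cmult (Copp e) A) (Cmult Ci q) <> RtoC 0 -> Cplus (Cmult (Copp e0) A) (Cmult Ci q) <> RtoC 0 ->
  Cminus e e0 <> RtoC 0 ->
  Cminus (Cdiv (Cminus (Cmult e (Cdiv (Cplus (Cmult J se) fv) (Cplus (Cmult (Copp e) A) (Cmult Ci q))))
                       (Cmult e0 (Cdiv (Cplus (Cmult J s0) fv) (Cplus (Cmult (Copp e0) A) (Cmult Ci q)))))
                (Cminus e e0))
         (Cplus (Cmult (Cdiv (Cmult Ci q) (Cmult (Cplus (Cmult (Copp e0) A) (Cmult Ci q)) (Cplus (Cmult (Copp e0) A) (Cmult Ci q))))
                       (Cplus (Cmult J s0) fv))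
                (Cmult (Cdiv e0 (Cplus (Cmult (Copp e0) A) (Cmult Ci q))) (Cmult J (Cplus c1 c2))))
  = Cplus (Cplus
      (Cmult (Cdiv (Cmult (Cmult (Cmult Ci q) A) (Cminus e e0))
                   (Cmult (Cplus (Cmult (Copp e) A) (Cmult Ci q)) (Cmult (Cplus (Cmult (Copp e0) A) (Cmult Ci q)) (Cplus (Cmult (Copp e0) A) (Cmult Ci q)))))
             (Cplus (Cmult J se) fv))
      (Cmult (Cdiv (Cmult Ci q) (Cmult (Cplus (Cmult (Copp e0) A) (Cmult Ci q)) (Cplus (Cmult (Copp e0) A) (Cmult Ci q))))
             (Cmult J (Cminus se s0))))
      (Cmult (Cdiv e0 (Cplus (Cmult (Copp e0) A) (Cmult Ci q)))
             (Cmult J (Cminus (Cminus (Cdiv (Cminus se s0) (Cminus e e0)) c1) c2))).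
Proof. intros H1 H2 H3. field. auto. Qed.

Lemma Cmod_Ci : Cmod Ci = 1.
Proof. unfold Cmod, Ci; simpl. replace (0 * (0 * 1) + 1 * (1 * 1)) with 1 by ring. apply sqrt_1. Qed.

Lemma div_le a b K : 0 <= a -> 0 < b -> 0 <= K -> a <= K * b -> a / b <= K.
Proof. intros Ha Hb HK H. apply Rmult_le_reg_r with b; auto. unfold Rdiv. rewrite Rmult_assoc, Rinv_l by lra. lra. Qed.

Lemma Dq_bound (K A q J2 : R) (h Ne N0 e0 se s0 c1 c2 fv : C) :
  0 < K -> Ne <> RtoC 0 -> N0 <> RtoC 0 -> h <> RtoC 0 -> 1 <= J2 ->
  Rabs q <= K * Cmod N0 -> Rabs A <= K * Cmod N0 -> J2 <= K * Cmod Ne -> J2 <= K * Cmod N0 -> Cmod e0 * J2 <= K * Cmod N0 ->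
  Cmod (Cplus (Cplus
      (Cmult (Cdiv (Cmult (Cmult (Cmult Ci (RtoC q)) (RtoC A)) h) (Cmult Ne (Cmult N0 N0))) (Cplus (Cmult (RtoC (- J2)) se) fv))
      (Cmult (Cdiv (Cmult Ci (RtoC q)) (Cmult N0 N0)) (Cmult (RtoC (- J2)) (Cminus se s0))))
      (Cmult (Cdiv e0 N0) (Cmult (RtoC (- J2)) (Cminus (Cminus (Cdiv (Cminus se s0) h) c1) c2))))
  <= Cmod h * K ^ 3 * (Cmod se + Cmod fv) + K ^ 2 * Cmod h * (Cmod (Cminus (Cminus (Cdiv (Cminus se s0) h) c1) c2) + Cmod c1 + Cmod c2)
     + K * Cmod (Cminus (Cminus (Cdiv (Cminus se s0) h) c1) c2).
Proof. intros HK HNe HN0 Hh HJ Hq HA HJe HJ0 He0.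
  set (E := Cminus (Cminus (Cdiv (Cminus se s0) h) c1) c2).
  assert (Hse : Cminus se s0 = Cmult h (Cplus (Cplus E c1) c2)) by (unfold E; field; auto).
  assert (pNe : 0 < Cmod Ne) by (apply Cmod_gt_0; auto). assert (pN0 : 0 < Cmod N0) by (apply Cmod_gt_0; auto).
  assert (pJ : Cmod (RtoC (- J2)) = J2) by (rewrite Cmod_R, Rabs_Ropp, Rabs_right; lra).
  pose proof (Cmod_ge_0 h). pose proof (Cmod_ge_0 se). pose proof (Cmod_ge_0 fv). pose proof (Cmod_ge_0 E).
  pose proof (Cmod_ge_0 c1). pose proof (Cmod_ge_0 c2). pose proof (Cmod_ge_0 e0).
  pose proof (Rabs_pos q). pose proof (Rabs_pos A).
  assert (Y : Cmod (Cplus (Cmult (RtoC (- J2)) se) fv) <= J2 * (Cmod se + Cmod fv)).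
  { eapply Rle_trans; [apply Cmod_triangle|]. rewrite Cmod_mult, pJ. nra. }
  eapply Rle_trans; [apply Cmod_triangle|]. apply Rplus_le_compat.
  eapply Rle_trans; [apply Cmod_triangle|]. apply Rplus_le_compat.
  - rewrite Cmod_mult, Cmod_div by (apply Cmod_gt_0 in HNe; apply Cmod_gt_0; rewrite !Cmod_mult; apply Rmult_lt_0_compat; [lra| apply Rmult_lt_0_compat; lra]).
    rewrite !Cmod_mult, Cmod_Ci, !Cmod_R.
    set (Z := Cmod (Cplus (Cmult (RtoC (- J2)) se) fv)) in *. pose proof (Cmod_ge_0 (Cplus (Cmult (RtoC (- J2)) se) fv)).
    assert (Q1 : 1 * Rabs q * Rabs A * Cmod h <= (K * Cmod N0) * (K * Cmod N0) * Cmod h).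
    { rewrite Rmult_1_l. apply Rmult_le_compat_r; auto. apply Rmult_le_compat; auto. }
    assert (Q2 : J2 <= K * Cmod Ne) by auto.
    apply Rle_trans with ((K * Cmod N0) * (K * Cmod N0) * Cmod h / (Cmod Ne * (Cmod N0 * Cmod N0)) * (J2 * (Cmod se + Cmod fv))).
    + assert (D : 0 < Cmod Ne * (Cmod N0 * Cmod N0)) by (apply Rmult_lt_0_compat; [lra|apply Rmult_lt_0_compat; lra]).
      assert (0 <= 1 * Rabs q * Rabs A * Cmod h) by (rewrite Rmult_1_l; apply Rmult_le_pos; [apply Rmult_le_pos|]; auto).
      apply Rmult_le_compat.
      * unfold Rdiv; apply Rmult_le_pos; [auto | left; apply Rinv_0_lt_compat; auto].
      * apply Cmod_ge_0.
      * unfold Rdiv; apply Rmult_le_compat_r; [left; apply Rinv_0_lt_compat; auto | exact Q1].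
      * exact Y.
    + replace ((K * Cmod N0) * (K * Cmod N0) * Cmod h / (Cmod Ne * (Cmod N0 * Cmod N0)) * (J2 * (Cmod se + Cmod fv)))
        with (K * K * Cmod h * (Cmod se + Cmod fv) * (J2 / Cmod Ne)) by (field; lra).
      replace (Cmod h * K ^ 3 * (Cmod se + Cmod fv)) with (K * K * Cmod h * (Cmod se + Cmod fv) * K) by ring.
      apply Rmult_le_compat_l. apply Rmult_le_pos; [|lra]. apply Rmult_le_pos; nra. apply div_le; lra.
  - rewrite Cmod_mult, Cmod_div by (apply Cmod_gt_0; rewrite Cmod_mult; nra).
    rewrite Hse, !Cmod_mult, Cmod_Ci, Cmod_R, pJ.
    assert (Cmod (Cplus (Cplus E c1) c2) <= Cmod E + Cmod c1 + Cmod c2).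
    { eapply Rle_trans; [apply Cmod_triangle|]. pose proof (Cmod_triangle E c1). lra. }
    apply Rle_trans with (K * (J2 / Cmod N0) * (Cmod h * (Cmod E + Cmod c1 + Cmod c2))).
    + replace (1 * Rabs q / (Cmod N0 * Cmod N0) * (J2 * (Cmod h * Cmod (Cplus (Cplus E c1) c2))))
        with ((Rabs q / Cmod N0) * (J2 / Cmod N0) * (Cmod h * Cmod (Cplus (Cplus E c1) c2))) by (field; lra).
      apply Rmult_le_compat. apply Rmult_le_pos. apply Rmult_le_pos; [lra|left; apply Rinv_0_lt_compat; lra].
      apply Rmult_le_pos; [lra|left; apply Rinv_0_lt_compat; lra]. apply Rmult_le_pos; auto. apply Cmod_ge_0.
      apply Rmult_le_compat_r. apply Rmult_le_pos; [lra|left; apply Rinv_0_lt_compat; lra]. apply div_le; lra.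
      apply Rmult_le_compat_l; auto.
    + replace (K ^ 2 * Cmod h * (Cmod E + Cmod c1 + Cmod c2)) with (K * K * (Cmod h * (Cmod E + Cmod c1 + Cmod c2))) by ring.
      apply Rmult_le_compat_r. nra. apply Rmult_le_compat_l. lra. apply div_le; lra.
  - rewrite Cmod_mult, Cmod_div by auto. rewrite Cmod_mult, pJ.
    replace (Cmod e0 / Cmod N0 * (J2 * Cmod E)) with ((Cmod e0 * J2) / Cmod N0 * Cmod E) by (field; lra).
    apply Rmult_le_compat_r; auto. apply div_le; try lra. nra. Qed.

Lemma T_bound (K J2 : R) (e N s fv : C) : 0 < K -> N <> RtoC 0 -> 1 <= J2 -> Cmod e * J2 <= K * Cmod N ->
  Cmod (Cmult e (Cdiv (Cplus (Cmult (RtoC (- J2)) s) fv) N)) <= K * (Cmod s + Cmod fv).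
Proof. intros HK HN HJ H. assert (pN : 0 < Cmod N) by (apply Cmod_gt_0; auto).
  assert (pJ : Cmod (RtoC (- J2)) = J2) by (rewrite Cmod_R, Rabs_Ropp, Rabs_right; lra).
  pose proof (Cmod_ge_0 s). pose proof (Cmod_ge_0 fv). pose proof (Cmod_ge_0 e).
  assert (Y : Cmod (Cplus (Cmult (RtoC (- J2)) s) fv) <= J2 * (Cmod s + Cmod fv)).
  { eapply Rle_trans; [apply Cmod_triangle|]. rewrite Cmod_mult, pJ. nra. }
  rewrite Cmod_mult, Cmod_div by auto.
  apply Rle_trans with (Cmod e * J2 / Cmod N * (Cmod s + Cmod fv)).
  - replace (Cmod e * J2 / Cmod N * (Cmod s + Cmod fv)) with (Cmod e * ((J2 * (Cmod s + Cmod fv)) / Cmod N)) by (field; lra).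
    apply Rmult_le_compat_l; auto. unfold Rdiv. apply Rmult_le_compat_r; auto. left; apply Rinv_0_lt_compat; auto.
  - apply Rmult_le_compat_r. lra. apply div_le; try lra. nra. Qed.

Lemma V_bound (K q J2 : R) (N0 e0 s0 fv c1 c2 : C) : 0 < K -> N0 <> RtoC 0 -> 1 <= J2 ->
  Rabs q <= K * Cmod N0 -> J2 <= K * Cmod N0 -> Cmod e0 * J2 <= K * Cmod N0 ->
  Cmod (Cplus (Cmult (Cdiv (Cmult Ci (RtoC q)) (Cmult N0 N0)) (Cplus (Cmult (RtoC (- J2)) s0) fv))
              (Cmult (Cdiv e0 N0) (Cmult (RtoC (- J2)) (Cplus c1 c2))))
  <= K ^ 2 * (Cmod s0 + Cmod fv) + K * (Cmod c1 + Cmod c2).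
Proof. intros HK HN HJ Hq HJ0 He0. assert (pN : 0 < Cmod N0) by (apply Cmod_gt_0; auto).
  assert (pJ : Cmod (RtoC (- J2)) = J2) by (rewrite Cmod_R, Rabs_Ropp, Rabs_right; lra).
  pose proof (Cmod_ge_0 s0). pose proof (Cmod_ge_0 fv). pose proof (Cmod_ge_0 e0). pose proof (Cmod_ge_0 c1). pose proof (Cmod_ge_0 c2).
  pose proof (Rabs_pos q).
  assert (Y : Cmod (Cplus (Cmult (RtoC (- J2)) s0) fv) <= J2 * (Cmod s0 + Cmod fv)).
  { eapply Rle_trans; [apply Cmod_triangle|]. rewrite Cmod_mult, pJ. nra. }
  eapply Rle_trans; [apply Cmod_triangle|]. apply Rplus_le_compat.
  - rewrite Cmod_mult, Cmod_div by (apply Cmod_gt_0; rewrite Cmod_mult; nra). rewrite !Cmod_mult, Cmod_Ci, Cmod_R.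
    apply Rle_trans with ((Rabs q / Cmod N0) * (J2 / Cmod N0) * (Cmod s0 + Cmod fv)).
    + replace ((Rabs q / Cmod N0) * (J2 / Cmod N0) * (Cmod s0 + Cmod fv)) with (1 * Rabs q / (Cmod N0 * Cmod N0) * (J2 * (Cmod s0 + Cmod fv))) by (field; lra).
      apply Rmult_le_compat_l; auto. unfold Rdiv. apply Rmult_le_pos. lra. left; apply Rinv_0_lt_compat; nra.
    + replace (K ^ 2 * (Cmod s0 + Cmod fv)) with (K * K * (Cmod s0 + Cmod fv)) by ring.
      apply Rmult_le_compat_r. lra. apply Rmult_le_compat.
      unfold Rdiv; apply Rmult_le_pos; [lra|left; apply Rinv_0_lt_compat; lra].
      unfold Rdiv; apply Rmult_le_pos; [lra|left; apply Rinv_0_lt_compat; lra].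
      apply div_le; lra. apply div_le; lra.
  - rewrite Cmod_mult, Cmod_div by auto. rewrite Cmod_mult, pJ.
    assert (Cmod (Cplus c1 c2) <= Cmod c1 + Cmod c2) by apply Cmod_triangle.
    pose proof (Cmod_ge_0 (Cplus c1 c2)).
    replace (Cmod e0 / Cmod N0 * (J2 * Cmod (Cplus c1 c2))) with ((Cmod e0 * J2) / Cmod N0 * Cmod (Cplus c1 c2)) by (field; lra).
    apply Rmult_le_compat; auto. unfold Rdiv; apply Rmult_le_pos; [nra|left; apply Rinv_0_lt_compat; lra].
    apply div_le; try lra. nra. Qed.

Lemma has_sumC_val d f S S' : has_sumC d f S -> S = S' -> has_sumC d f S'.
Proof. intros H ->; auto. Qed.

Lemma E_decomp d rho m (Ue U0 Up : Coef) (h : C) k j S1 S2 S3 S4 S5 :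
  0 <= rho -> 0 <= m -> length k = d -> h <> RtoC 0 ->
  bnd d rho m (cm Ue) S1 -> bnd d rho m (cm U0) S2 -> bnd d rho m (cm Up) S3 ->
  bnd d rho m (cm (fun k j => Cminus (Cdiv (Cminus (Ue k j) (U0 k j)) h) (Up k j))) S4 ->
  bnd d rho m (cm (fun k j => Cminus (Ue k j) (U0 k j))) S5 ->
  Cminus (Cminus (Cdiv (Cminus (sqU d Ue k j) (sqU d U0 k j)) h) (conv d Up U0 k j)) (conv d U0 Up k j)
  = Cplus (Cplus (conv d (fun k j => Cminus (Cdiv (Cminus (Ue k j) (U0 k j)) h) (Up k j)) Ue k j)
                 (conv d Up (fun k j => Cminus (Ue k j) (U0 k j)) k j))
          (conv d U0 (fun k j => Cminus (Cdiv (Cminus (Ue k j) (U0 k j)) h) (Up k j)) k j).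
Proof. intros Hr Hm Hk Hh B1 B2 B3 B4 B5.
  set (R := fun k j => Cminus (Cdiv (Cminus (Ue k j) (U0 k j)) h) (Up k j)) in *.
  set (De := fun k j => Cminus (Ue k j) (U0 k j)) in *.
  assert (Hn : length (fst (k, j)) = d) by auto.
  assert (H1 := conv_has d rho m Ue Ue _ _ (k,j) Hr Hm Hn B1 B1).
  assert (H2 := conv_has d rho m U0 U0 _ _ (k,j) Hr Hm Hn B2 B2).
  assert (H3 := conv_has d rho m Up U0 _ _ (k,j) Hr Hm Hn B3 B2).
  assert (H4 := conv_has d rho m U0 Up _ _ (k,j) Hr Hm Hn B2 B3).
  assert (H5 := conv_has d rho m R Ue _ _ (k,j) Hr Hm Hn B4 B1).
  assert (H6 := conv_has d rho m Up De _ _ (k,j) Hr Hm Hn B3 B5).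
  assert (H7 := conv_has d rho m U0 R _ _ (k,j) Hr Hm Hn B2 B4).
  simpl in H1, H2, H3, H4, H5, H6, H7.
  set (minus1 := RtoC (-1)).
  assert (L := has_sumC_plus _ _ _ _ _
     (has_sumC_plus _ _ _ _ _ (has_sumC_scal _ _ _ (/ h) (has_sumC_plus _ _ _ _ _ H1 (has_sumC_scal _ _ _ minus1 H2)))
                               (has_sumC_scal _ _ _ minus1 H3))
     (has_sumC_scal _ _ _ minus1 H4)).
  assert (Rr := has_sumC_plus _ _ _ _ _ (has_sumC_plus _ _ _ _ _ H5 H6) H7).
  apply (has_sumC_unique d (fun x => Cplus (Cplus (cg R Ue (k,j) x) (cg Up De (k,j) x)) (cg U0 R (k,j) x))); auto.
  eapply has_sumC_val; [eapply has_sumC_ext; [|apply L]|].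
  - intros x. unfold cg, R, De, minus1. simpl. field. auto.
  - unfold minus1, sqU. fold (conv d Ue Ue k j). fold (conv d U0 U0 k j). field. auto. Qed.

Lemma J2_ge1 (j : Z) : j <> 0%Z -> 1 <= IZR j ^ 2.
Proof. intros Hj. destruct (Z_lt_le_dec j 0). assert (IZR j <= -1) by (apply IZR_le; lia). nra.
  assert (1 <= IZR j) by (apply IZR_le; lia). nra. Qed.

Lemma T_pt d w beta f sigma mu K e U k j : 0 < K -> 2 <= mu -> Omega sigma mu e ->
  (forall mu e k j, 2 <= mu -> Omega sigma mu e -> j <> 0%Z ->
    Nsym w beta e k j <> RtoC 0 /\ Cmod e * IZR j ^ 2 <= K * Cmod (Nsym w beta e k j) /\
    IZR j ^ 2 <= K * Cmod (Nsym w beta e k j) /\ Rabs (qq w k) <= K * Cmod (Nsym w beta e k j) /\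
    Rabs (AA w beta k j) <= K * Cmod (Nsym w beta e k j)) ->
  Cmod (T_op d w beta f e U k j) <= K * (cm (sqU d U) (k, j) + cm f (k, j)).
Proof. intros HK Hmu He MB. unfold T_op, cm; cbn [fst snd].
  destruct (Z.eqb_spec j 0) as [->|Hj].
  - rewrite Cmod_0. pose proof (Cmod_ge_0 (sqU d U k 0%Z)). pose proof (Cmod_ge_0 (f k 0%Z)). nra.
  - destruct (MB mu e k j Hmu He Hj) as [HN [H1 _]]. apply T_bound; auto. apply J2_ge1; auto. Qed.

Definition MBP w beta sigma K := forall mu e k j, 2 <= mu -> Omega sigma mu e -> j <> 0%Z ->
    Nsym w beta e k j <> RtoC 0 /\ Cmod e * IZR j ^ 2 <= K * Cmod (Nsym w beta e k j) /\
    IZR j ^ 2 <= K * Cmod (Nsym w beta e k j) /\ Rabs (qq w k) <= K * Cmod (Nsym w beta e k j) /\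
    Rabs (AA w beta k j) <= K * Cmod (Nsym w beta e k j).

Lemma T_bnd d w rho m beta f sigma mu K Sf e U S : INR d + 1 <= m -> 0 <= rho -> 0 < K -> 2 <= mu ->
  MBP w beta sigma K -> bnd d rho m (cm f) Sf -> Omega sigma mu e -> bnd d rho m (cm U) S -> 0 <= S ->
  bnd d rho m (cm (T_op d w beta f e U)) (K ^ 2 * (2 * (2 * (Kc d m * S * S)) + 2 * Sf)).
Proof. intros Hm' Hr HK Hmu MB Bf He BU HS.
  assert (Hm : 0 <= m) by (pose proof (pos_INR d); lra).
  apply (bnd_dom _ _ _ _ (fun n => K * (cm (sqU d U) n + cm f n))); auto.
  - intros [k j] _. split. apply Cmod_ge_0. apply (T_pt d w beta f sigma mu K e U k j HK Hmu He MB).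
  - apply bnd_scal. apply bnd_plus; auto. apply (conv_bnd d rho m U U S S); auto. Qed.

Lemma T_inH d w rho m beta f sigma mu K e U : INR d + 1 <= m -> 0 <= rho -> 0 < K -> 2 <= mu ->
  MBP w beta sigma K -> in_H d rho m f -> Omega sigma mu e -> in_H d rho m U -> in_H d rho m (T_op d w beta f e U).
Proof. intros Hm' Hr HK Hmu MB Hf He HU. destruct (in_H_bnd _ _ _ _ Hf) as [Bf _]. destruct (in_H_bnd _ _ _ _ HU) as [BU HS].
  eapply in_H_of. intros k _. reflexivity. eapply T_bnd; eauto. Qed.

Definition Vdef d w beta (f : Coef) e0 (U0 Up : Coef) : Coef := fun k j =>
  if Z.eqb j 0 then RtoC 0 else
  Cplus (Cmult (Cdiv (Cmult Ci (RtoC (qq w k))) (Cmult (Nsym w beta e0 k j) (Nsym w beta e0 k j)))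
               (Cplus (Cmult (RtoC (- IZR j ^ 2)) (sqU d U0 k j)) (f k j)))
        (Cmult (Cdiv e0 (Nsym w beta e0 k j)) (Cmult (RtoC (- IZR j ^ 2)) (Cplus (conv d Up U0 k j) (conv d U0 Up k j)))).

Definition Edef d (Ue U0 Up : Coef) (h : C) : Coef := fun k j =>
  Cminus (Cminus (Cdiv (Cminus (sqU d Ue k j) (sqU d U0 k j)) h) (conv d Up U0 k j)) (conv d U0 Up k j).

Lemma V_pt d w beta f sigma mu K e0 U0 Up k j : 0 < K -> 2 <= mu -> Omega sigma mu e0 -> MBP w beta sigma K ->
  Cmod (Vdef d w beta f e0 U0 Up k j) <= K ^ 2 * (cm (sqU d U0) (k, j) + cm f (k, j)) + K * (cm (conv d Up U0) (k, j) + cm (conv d U0 Up) (k, j)).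
Proof. intros HK Hmu He MB. unfold Vdef, cm; cbn [fst snd].
  destruct (Z.eqb_spec j 0) as [->|Hj].
  - rewrite Cmod_0. pose proof (Cmod_ge_0 (sqU d U0 k 0%Z)). pose proof (Cmod_ge_0 (f k 0%Z)).
    pose proof (Cmod_ge_0 (conv d Up U0 k 0%Z)). pose proof (Cmod_ge_0 (conv d U0 Up k 0%Z)). nra.
  - destruct (MB mu e0 k j Hmu He Hj) as [HN [H1 [H2 [H3 _]]]]. apply V_bound; auto. apply J2_ge1; auto. Qed.

Lemma V_inH d w rho m beta f sigma mu K e0 U0 Up : INR d + 1 <= m -> 0 <= rho -> 0 < K -> 2 <= mu ->
  MBP w beta sigma K -> in_H d rho m f -> Omega sigma mu e0 -> in_H d rho m U0 -> in_H d rho m Up ->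
  in_H d rho m (Vdef d w beta f e0 U0 Up).
Proof. intros Hm' Hr HK Hmu MB Hf He HU HV.
  assert (Hm : 0 <= m) by (pose proof (pos_INR d); lra).
  destruct (in_H_bnd _ _ _ _ Hf) as [Bf Sf]. destruct (in_H_bnd _ _ _ _ HU) as [BU SU]. destruct (in_H_bnd _ _ _ _ HV) as [BV SV].
  eapply in_H_of. intros k _. reflexivity.
  apply (bnd_dom _ _ _ _ (fun n => K ^ 2 * (cm (sqU d U0) n + cm f n) + K * (cm (conv d Up U0) n + cm (conv d U0 Up) n))); auto.
  - intros [k j] _. split. apply Cmod_ge_0. eapply V_pt; eauto.
  - apply bnd_plus. exact Hr. exact Hm.
    + apply bnd_scal. apply bnd_plus. exact Hr. exact Hm. exact (conv_bnd d rho m U0 U0 _ _ Hm' Hr Hm BU BU SU SU). exact Bf.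
    + apply bnd_scal. apply bnd_plus. exact Hr. exact Hm. exact (conv_bnd d rho m Up U0 _ _ Hm' Hr Hm BV BU SV SU). exact (conv_bnd d rho m U0 Up _ _ Hm' Hr Hm BU BV SU SV). Qed.

Lemma Dq_pt d w beta f sigma mu K e e0 Ue U0 Up k j : 0 < K -> 2 <= mu -> Omega sigma mu e -> Omega sigma mu e0 ->
  MBP w beta sigma K -> Cminus e e0 <> RtoC 0 ->
  Cmod (Cminus (Cdiv (Cminus (T_op d w beta f e Ue k j) (T_op d w beta f e0 U0 k j)) (Cminus e e0)) (Vdef d w beta f e0 U0 Up k j))
  <= Cmod (Cminus e e0) * K ^ 3 * (cm (sqU d Ue) (k, j) + cm f (k, j))
     + K ^ 2 * Cmod (Cminus e e0) * (cm (Edef d Ue U0 Up (Cminus e e0)) (k, j) + cm (conv d Up U0) (k, j) + cm (conv d U0 Up) (k, j))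
     + K * cm (Edef d Ue U0 Up (Cminus e e0)) (k, j).
Proof. intros HK Hmu He He0 MB Hh. unfold T_op, Vdef, Edef, cm; cbn [fst snd].
  pose proof (Cmod_ge_0 (Cminus e e0)).
  destruct (Z.eqb_spec j 0) as [->|Hj].
  - replace (Cminus (Cdiv (Cminus (RtoC 0) (RtoC 0)) (Cminus e e0)) (RtoC 0)) with (RtoC 0) by (field; auto).
    rewrite Cmod_0. pose proof (pow_le K 3 ltac:(lra)). pose proof (pow_le K 2 ltac:(lra)).
    repeat match goal with |- context [Cmod ?x] => lazymatch goal with H : 0 <= Cmod x |- _ => fail | _ => pose proof (Cmod_ge_0 x) end end.
    apply Rplus_le_le_0_compat; [apply Rplus_le_le_0_compat|]; repeat apply Rmult_le_pos; try lra;
      repeat apply Rplus_le_le_0_compat; auto.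
  - destruct (MB mu e k j Hmu He Hj) as [HN [H1 [H2 [H3 H4]]]].
    destruct (MB mu e0 k j Hmu He0 Hj) as [HN0 [H01 [H02 [H03 H04]]]].
    rewrite (Nsym_eq w beta e k j) in *. rewrite (Nsym_eq w beta e0 k j) in *.
    rewrite (ID e e0 (RtoC (AA w beta k j)) (RtoC (qq w k)) (RtoC (- IZR j ^ 2)) (sqU d Ue k j) (sqU d U0 k j)
               (conv d Up U0 k j) (conv d U0 Up k j) (f k j) HN HN0 Hh).
    apply Dq_bound; auto. apply J2_ge1; auto. Qed.

Lemma arith_E KC r C2 Sp hh C1 S0 : 0 <= KC -> 0 <= r -> 0 <= C2 -> 0 <= Sp -> 0 <= hh -> 0 <= C1 -> 0 <= S0 ->
  2 * (2 * (2 * (KC * r * C2)) + 2 * (2 * (KC * Sp * (hh ^ 2 * C1)))) + 2 * (2 * (KC * S0 * r))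
  <= (8 * KC * C2 + 8 * KC * Sp * C1 + 4 * KC * S0) * (r + hh ^ 2).
Proof. intros. assert (0 <= hh ^ 2) by apply pow2_ge_0.
  assert (0 <= KC * C2 * hh ^ 2) by (apply Rmult_le_pos; [apply Rmult_le_pos|]; auto).
  assert (0 <= KC * Sp * C1 * r) by (apply Rmult_le_pos; [apply Rmult_le_pos; [apply Rmult_le_pos|]|]; auto).
  assert (0 <= KC * S0 * hh ^ 2) by (apply Rmult_le_pos; [apply Rmult_le_pos|]; auto).
  replace ((8 * KC * C2 + 8 * KC * Sp * C1 + 4 * KC * S0) * (r + hh ^ 2)) with
    (2 * (2 * (2 * (KC * r * C2)) + 2 * (2 * (KC * Sp * (hh ^ 2 * C1)))) + 2 * (2 * (KC * S0 * r))
     + 8 * (KC * C2 * hh ^ 2) + 8 * (KC * Sp * C1 * r) + 4 * (KC * S0 * hh ^ 2)) by ring. lra. Qed.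

Lemma arith_D hh r K C3 Sf CE Cc : 0 <= hh <= 1 -> 0 <= r <= 1 -> 0 < K -> 0 <= C3 -> 0 <= Sf -> 0 <= CE -> 0 <= Cc ->
  2 * (2 * ((hh * K ^ 3) ^ 2 * (2 * C3 + 2 * Sf)) + 2 * ((K ^ 2 * hh) ^ 2 * (2 * (2 * (CE * (r + hh ^ 2)) + 2 * Cc) + 2 * Cc)))
  + 2 * (K ^ 2 * (CE * (r + hh ^ 2)))
  <= (4 * K ^ 6 * (2 * C3 + 2 * Sf) + 4 * K ^ 4 * (8 * CE + 6 * Cc) + 2 * K ^ 2 * CE + 1) * (r + hh ^ 2).
Proof. intros [h0 h1] [r0 r1] HK HC3 HSf HCE HCc.
  set (a := K ^ 6). set (b := K ^ 4). set (c := K ^ 2). set (P := r + hh ^ 2). set (Q2 := hh ^ 2).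
  assert (a0 : 0 <= a) by (apply pow_le; lra). assert (b0 : 0 <= b) by (apply pow_le; lra). assert (c0 : 0 <= c) by (apply pow_le; lra).
  assert (Q20 : 0 <= Q2) by apply pow2_ge_0. assert (Q21 : Q2 <= 1) by (unfold Q2; nra).
  assert (HP : Q2 <= P) by (unfold P; fold Q2; lra). assert (HP2 : P <= 2) by (unfold P; fold Q2; lra).
  replace ((hh * K ^ 3) ^ 2) with (Q2 * a) by (unfold Q2, a; ring).
  replace ((c * hh) ^ 2) with (b * Q2) by (unfold Q2, b, c; ring).
  assert (X1 : 0 <= 2 * C3 + 2 * Sf) by lra.
  assert (S1 : b * Q2 * (2 * (2 * (CE * P) + 2 * Cc) + 2 * Cc) <= b * Q2 * (8 * CE + 6 * Cc)).
  { apply Rmult_le_compat_l. apply Rmult_le_pos; auto. nra. }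
  assert (S2 : Q2 * (4 * a * (2 * C3 + 2 * Sf) + 4 * b * (8 * CE + 6 * Cc)) <= P * (4 * a * (2 * C3 + 2 * Sf) + 4 * b * (8 * CE + 6 * Cc))).
  { apply Rmult_le_compat_r; auto. assert (0 <= a * (2 * C3 + 2 * Sf)) by (apply Rmult_le_pos; auto).
    assert (0 <= b * (8 * CE + 6 * Cc)) by (apply Rmult_le_pos; lra). lra. }
  assert (0 <= P) by lra.
  replace ((4 * a * (2 * C3 + 2 * Sf) + 4 * b * (8 * CE + 6 * Cc) + 2 * c * CE + 1) * P) with
    (P * (4 * a * (2 * C3 + 2 * Sf) + 4 * b * (8 * CE + 6 * Cc)) + 2 * (c * (CE * P)) + P) by ring.
  lra. Qed.

Lemma arith_final Ctot r hh eta eta2 : 1 <= Ctot -> 0 <= r -> 0 <= hh -> 0 < eta -> 0 < eta2 ->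
  eta2 <= eta / (2 * Ctot + 1) -> r < eta2 ^ 2 -> hh < eta2 -> sqrt (Ctot * (r + hh ^ 2)) < eta.
Proof. intros HC Hr Hh He He2 Hle Hr2 Hh2.
  assert (hh ^ 2 < eta2 ^ 2) by nra.
  set (t := eta / (2 * Ctot + 1)) in *. assert (Et : eta = t * (2 * Ctot + 1)) by (unfold t; field; lra).
  assert (t0 : 0 < t) by (unfold t; apply Rdiv_lt_0_compat; lra).
  assert (eta2 ^ 2 <= t ^ 2) by (apply pow_incr; lra).
  assert (Ctot * (r + hh ^ 2) < 2 * Ctot * t ^ 2).
  { apply Rlt_le_trans with (Ctot * (2 * eta2 ^ 2)). apply Rmult_lt_compat_l; lra.
    replace (2 * Ctot * t ^ 2) with (Ctot * (2 * t ^ 2)) by ring. apply Rmult_le_compat_l; lra. }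
  assert (2 * Ctot * t ^ 2 <= eta ^ 2). { rewrite Et. pose proof (pow2_ge_0 t). nra. }
  rewrite <- (sqrt_pow2 eta) by lra. apply sqrt_lt_1_alt. split; [|lra].
  apply Rmult_le_pos; [lra|]. pose proof (pow2_ge_0 hh); lra. Qed.

Lemma Cmod_minus_le (a b : C) : Cmod (Cminus a b) <= Cmod a + Cmod b.
Proof. unfold Cminus. eapply Rle_trans; [apply Cmod_triangle|]. rewrite Cmod_opp. lra. Qed.

Lemma analytic_T d w rho m beta f sigma mu K U : INR d + 1 <= m -> 0 <= rho -> 0 < K -> 2 <= mu ->
  MBP w beta sigma K -> in_H d rho m f -> analytic_on d rho m (Omega sigma mu) U ->
  analytic_on d rho m (Omega sigma mu) (fun e => T_op d w beta f e (U e)).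
Proof.
  intros Hm' Hr HK Hmu MB Hf [UH UD].
  assert (Hm : 0 <= m) by (pose proof (pos_INR d); lra).
  split. { intros e He. eapply T_inH; eauto. }
  intros e0 He0. destruct (UD e0 He0) as [Up [HUp Hcd]].
  assert (HU0 := UH e0 He0). set (U0 := U e0) in *.
  destruct (in_H_bnd _ _ _ _ Hf) as [Bf Sf0]. set (Sf := real (sqnorm d rho m f)) in *.
  destruct (in_H_bnd _ _ _ _ HU0) as [B0 S00]. set (S0 := real (sqnorm d rho m U0)) in *.
  destruct (in_H_bnd _ _ _ _ HUp) as [Bp Sp0]. set (Sp := real (sqnorm d rho m Up)) in *.
  set (KC := Kc d m). assert (KC0 : 0 <= KC) by apply Kc_ge0.
  set (C1 := 2 + 2 * Sp). set (C2 := 2 * S0 + 2 * C1). set (C3 := 2 * (KC * C2 * C2)).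
  set (CE := 8 * KC * C2 + 8 * KC * Sp * C1 + 4 * KC * S0).
  set (Cc := 2 * (KC * Sp * S0)).
  set (Ctot := 4 * K ^ 6 * (2 * C3 + 2 * Sf) + 4 * K ^ 4 * (8 * CE + 6 * Cc) + 2 * K ^ 2 * CE + 1).
  assert (C10 : 0 <= C1) by (unfold C1; lra). assert (C20 : 0 <= C2) by (unfold C2; lra).
  assert (C30 : 0 <= C3) by (unfold C3; apply Rmult_le_pos; [lra|apply Rmult_le_pos; [apply Rmult_le_pos|]; auto]).
  assert (CE0 : 0 <= CE).
  { unfold CE. assert (0 <= KC * C2) by (apply Rmult_le_pos; auto). assert (0 <= KC * Sp * C1) by (apply Rmult_le_pos; [apply Rmult_le_pos|]; auto).
    assert (0 <= KC * S0) by (apply Rmult_le_pos; auto). lra. }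
  assert (Cc0 : 0 <= Cc) by (unfold Cc; apply Rmult_le_pos; [lra|apply Rmult_le_pos; [apply Rmult_le_pos|]; auto]).
  assert (Ct1 : 1 <= Ctot).
  { unfold Ctot. assert (0 <= K ^ 6) by (apply pow_le; lra). assert (0 <= K ^ 4) by (apply pow_le; lra).
    assert (0 <= K ^ 2) by (apply pow_le; lra).
    assert (0 <= K ^ 6 * (2 * C3 + 2 * Sf)) by (apply Rmult_le_pos; lra).
    assert (0 <= K ^ 4 * (8 * CE + 6 * Cc)) by (apply Rmult_le_pos; lra).
    assert (0 <= K ^ 2 * CE) by (apply Rmult_le_pos; lra). lra. }
  exists (Vdef d w beta f e0 U0 Up). split. { eapply V_inH; eauto. }
  intros eta Heta.
  set (eta2 := Rmin 1 (eta / (2 * Ctot + 1))).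
  assert (E20 : 0 < eta2) by (unfold eta2; apply Rmin_glb_lt; [lra| apply Rdiv_lt_0_compat; lra]).
  assert (E21 : eta2 <= 1) by apply Rmin_l. assert (E22 : eta2 <= eta / (2 * Ctot + 1)) by apply Rmin_r.
  destruct (Hcd eta2 E20) as [dl [Hdl Hd]].
  exists (Rmin dl eta2). split. { apply Rmin_glb_lt; auto. }
  intros e He [Hh0 Hh1].
  assert (Hh1a : Cmod (Cminus e e0) < dl) by (eapply Rlt_le_trans; [apply Hh1|apply Rmin_l]).
  assert (Hh1b : Cmod (Cminus e e0) < eta2) by (eapply Rlt_le_trans; [apply Hh1|apply Rmin_r]).
  assert (HRn := Hd e He (conj Hh0 Hh1a)).
  assert (Hh : Cminus e e0 <> RtoC 0). { intros E. rewrite E, Cmod_0 in Hh0. lra. }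
  set (h := Cminus e e0) in *. set (hh := Cmod h) in *.
  assert (HUe := UH e He). set (Ue := U e) in *.
  set (R := fun k j => Cminus (Cdiv (Cminus (Ue k j) (U0 k j)) h) (Up k j)) in *.
  assert (hh0 : 0 < hh) by auto.
  assert (HRH : in_H d rho m R).
  { apply (in_H_of _ _ _ _ (2 * ((/ hh) ^ 2 * (2 * real (sqnorm d rho m Ue) + 2 * S0)) + 2 * Sp)).
    - intros k Hk. unfold R. rewrite (proj1 HUe k Hk), (proj1 HU0 k Hk), (proj1 HUp k Hk). field. auto.
    - destruct (in_H_bnd _ _ _ _ HUe) as [Be _].
      apply (bnd_dom _ _ _ _ (fun n => / hh * (cm Ue n + cm U0 n) + cm Up n)); auto.
      + intros [k j] _. split. apply Cmod_ge_0. unfold R, cm; cbn [fst snd].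
        eapply Rle_trans; [apply Cmod_minus_le|]. apply Rplus_le_compat_r.
        unfold Cdiv. rewrite Cmod_mult, Cmod_inv by auto. fold hh. rewrite Rmult_comm.
        apply Rmult_le_compat_l. left; apply Rinv_0_lt_compat; auto. apply Cmod_minus_le.
      + apply bnd_plus; auto. apply bnd_scal. apply bnd_plus; auto. }
  destruct (in_H_bnd _ _ _ _ HRH) as [BR r0]. set (r := real (sqnorm d rho m R)) in *.
  assert (Hr2 : r < eta2 ^ 2) by (apply Hnorm_lt; auto).
  assert (r1 : r <= 1) by (assert (eta2 ^ 2 <= 1) by nra; lra).
  assert (hh1 : hh <= 1) by lra.
  assert (hh21 : hh ^ 2 <= 1) by nra.
  set (De := fun k j => Cminus (Ue k j) (U0 k j)).
  assert (BDe : bnd d rho m (cm De) (hh ^ 2 * C1)).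
  { apply bnd_weaken with (hh ^ 2 * (2 * r + 2 * Sp)).
    - apply (bnd_dom _ _ _ _ (fun n => hh * (cm R n + cm Up n))); auto.
      + intros [k j] _. split. apply Cmod_ge_0. unfold De, cm; cbn [fst snd].
        replace (Cminus (Ue k j) (U0 k j)) with (Cmult h (Cplus (R k j) (Up k j))) by (unfold R; field; auto).
        rewrite Cmod_mult. apply Rmult_le_compat_l. lra. apply Cmod_triangle.
      + apply bnd_scal. apply bnd_plus; auto.
    - apply Rmult_le_compat_l. apply pow2_ge_0. unfold C1; lra. }
  assert (BUe : bnd d rho m (cm Ue) C2).
  { apply bnd_weaken with (2 * S0 + 2 * (hh ^ 2 * C1)).
    - apply (bnd_dom _ _ _ _ (fun n => cm U0 n + cm De n)); auto.
      + intros [k j] _. split. apply Cmod_ge_0. unfold De, cm; cbn [fst snd].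
        replace (Ue k j) with (Cplus (U0 k j) (Cminus (Ue k j) (U0 k j))) at 1 by ring. apply Cmod_triangle.
      + apply bnd_plus; auto.
    - unfold C2. assert (hh ^ 2 * C1 <= C1) by (pose proof (Rmult_le_compat_r C1 _ _ C10 hh21); lra). lra. }
  set (E := Edef d Ue U0 Up h).
  assert (BE : bnd d rho m (cm E) (CE * (r + hh ^ 2))).
  { apply bnd_weaken with (2 * (2 * (2 * (KC * r * C2)) + 2 * (2 * (KC * Sp * (hh ^ 2 * C1)))) + 2 * (2 * (KC * S0 * r))).
    - apply (bnd_dom _ _ _ _ (fun n => cm (conv d R Ue) n + cm (conv d Up De) n + cm (conv d U0 R) n)); auto.
      + intros [k j] Hk. split. apply Cmod_ge_0. unfold E, cm; cbn [fst snd] in *. unfold Edef.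
        rewrite (E_decomp d rho m Ue U0 Up h k j C2 S0 Sp r (hh ^ 2 * C1) Hr Hm Hk Hh BUe B0 Bp BR BDe).
        eapply Rle_trans; [apply Cmod_triangle|]. apply Rplus_le_compat_r. apply Cmod_triangle.
      + apply bnd_plus; auto. apply bnd_plus; auto.
        * exact (conv_bnd d rho m R Ue _ _ Hm' Hr Hm BR BUe r0 C20).
        * exact (conv_bnd d rho m Up De _ _ Hm' Hr Hm Bp BDe Sp0 (Rmult_le_pos _ _ (pow2_ge_0 hh) C10)).
        * exact (conv_bnd d rho m U0 R _ _ Hm' Hr Hm B0 BR S00 r0).
    - apply arith_E; auto; lra. }
  assert (Bse : bnd d rho m (cm (sqU d Ue)) C3) by exact (conv_bnd d rho m Ue Ue _ _ Hm' Hr Hm BUe BUe C20 C20).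
  assert (Bc1 : bnd d rho m (cm (conv d Up U0)) Cc) by exact (conv_bnd d rho m Up U0 _ _ Hm' Hr Hm Bp B0 Sp0 S00).
  assert (Bc2 : bnd d rho m (cm (conv d U0 Up)) Cc).
  { eapply bnd_weaken. exact (conv_bnd d rho m U0 Up _ _ Hm' Hr Hm B0 Bp S00 Sp0). unfold Cc, KC; right; ring. }
  eapply Rle_lt_trans; [apply Hnorm_bnd|].
  2: { apply (arith_final Ctot r hh eta eta2); auto. lra. }
  apply bnd_weaken with (2 * (2 * ((hh * K ^ 3) ^ 2 * (2 * C3 + 2 * Sf)) + 2 * ((K ^ 2 * hh) ^ 2 * (2 * (2 * (CE * (r + hh ^ 2)) + 2 * Cc) + 2 * Cc)))
  + 2 * (K ^ 2 * (CE * (r + hh ^ 2)))).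
  - apply (bnd_dom _ _ _ _ (fun n => hh * K ^ 3 * (cm (sqU d Ue) n + cm f n)
          + K ^ 2 * hh * (cm E n + cm (conv d Up U0) n + cm (conv d U0 Up) n) + K * cm E n)); auto.
    + intros [k j] _. split. apply Cmod_ge_0. unfold cm at 1; cbn [fst snd].
      apply (Dq_pt d w beta f sigma mu K e e0 Ue U0 Up k j HK Hmu He He0 MB Hh).
    + apply bnd_plus; auto. apply bnd_plus; auto.
      * apply bnd_scal. apply bnd_plus; auto.
      * apply bnd_scal. apply bnd_plus; auto. apply bnd_plus; auto.
      * apply bnd_scal. auto.
  - apply arith_D; auto; lra. Qed.

Theorem proposition7p5 :
  forall (d : nat) (w : list R) (rho m beta : R) (f : Coef),
    (0 < d)%nat -> length w = d -> 0 < rho -> INR d + 5 < m ->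
    0 < beta -> (forall n : Z, / sqrt beta <> IZR n) ->
    in_H d rho m f ->
    exists mu0 sigma0, 0 < sigma0 /\
      forall mu sigma, mu0 <= mu -> 0 < sigma <= sigma0 ->
        (forall U : C -> Coef,
           in_H_Omega d rho m (Omega sigma mu) U ->
           in_H_Omega d rho m (Omega sigma mu) (fun e => T_op d w beta f e (U e))) /\
        (forall U : C -> Coef,
           analytic_on d rho m (Omega sigma mu) U ->
           analytic_on d rho m (Omega sigma mu) (fun e => T_op d w beta f e (U e))).
Proof.
  intros d w rho m beta f Hd Hw Hrho Hm Hbeta Hsb Hf.
  exists 2, 1. split; [lra|]. intros mu sigma Hmu Hsig.
  destruct (mult_bounds w beta sigma Hbeta Hsb Hsig) as [K [HK MB]].
  assert (Hm' : INR d + 1 <= m) by lra. assert (Hr : 0 <= rho) by lra.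
  assert (AN := fun U HU => analytic_T d w rho m beta f sigma mu K U Hm' Hr HK Hmu MB Hf HU).
  split; [|exact AN].
  intros U [HA [M HM]]. split. apply AN; auto.
  destruct (in_H_bnd _ _ _ _ Hf) as [Bf Sf0].
  exists (sqrt (K ^ 2 * (2 * (2 * (Kc d m * M ^ 2 * M ^ 2)) + 2 * real (sqnorm d rho m f)))).
  intros e He. apply Hnorm_bnd.
  assert (HU := proj1 HA e He). destruct (in_H_bnd _ _ _ _ HU) as [BU SU].
  assert (SM := Hnorm_le _ _ _ _ _ HU (HM e He)).
  eapply bnd_weaken. apply (T_bnd d w rho m beta f sigma mu K _ e (U e) _ Hm' Hr HK Hmu MB Bf He BU SU).
  apply Rmult_le_compat_l. apply pow2_ge_0. apply Rplus_le_compat_r. apply Rmult_le_compat_l. lra.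
  apply Rmult_le_compat_l. lra.
  pose proof (Kc_ge0 d m).
  replace (Kc d m * M ^ 2 * M ^ 2) with (Kc d m * (M ^ 2 * M ^ 2)) by ring.
  replace (Kc d m * real (sqnorm d rho m (U e)) * real (sqnorm d rho m (U e))) with
    (Kc d m * (real (sqnorm d rho m (U e)) * real (sqnorm d rho m (U e)))) by ring.
  apply Rmult_le_compat_l; auto. apply Rmult_le_compat; auto.
Qed.
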